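(* Let $\Pi_{i\in 1..n} S_i$ be a program of the source language and let $\mathcal C$ be the set of channels occurring in it. Then $$\Pi_{i\in 1..n} S_i \;\sim\; \Pi_{c\in\mathcal C}\odot_c \;|\; \Pi_{i\in 1..n}\widehat{S_i},$$ where $\sim$ is the largest relation between programs and machine states such that $\mathcal P\sim\sigma$ implies all of: (Correspondence) $\sigma\to^\star\sigma'$ for some $\sigma'$ with $\ulcorner\mathcal P\urcorner=\ulcorner\sigma'\urcorner$; (Safety) whenever $\sigma\to\sigma'$, there is $\mathcal P'$ with $\mathcal P\to^\star\mathcal P'$ and $\mathcal P'\sim\sigma'$; (Progress) whenever $\mathcal P$ can reduce (i.e. $\mathcal P\to\mathcal Q$ for some $\mathcal Q$), there are $\sigma'$ and $\mathcal P'$ with $\sigma\to^+\sigma'$, $\mathcal P\to\mathcal P'$ and $\mathcal P'\sim\sigma'$.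
   Context: Source language. Actions $\alpha,\beta$ are of the form $c$ (input on channel $c$) or $\overline c$ (output on channel $c$). A program is a parallel composition $S_1\,|\,\dots\,|\,S_n$ where each $S_i$ is either an action $\alpha$ or $\mathsf{select}(\vec\alpha)$ for a finite list of actions $\vec\alpha$. Program reduction $\to$ is generated by the single rule: if $c\in\vec\alpha$ and $\overline c\in\vec\beta$ then $\mathsf{select}(\vec\alpha)\,|\,\mathsf{select}(\vec\beta)\to c\,|\,\overline c$, closed under the usual structural rules for parallel composition (commutativity, associativity, reduction inside a parallel context); actions themselves do not reduce. Abstract machine. States are $\sigma::=\sigma\,|\,\sigma' \mid (\nu p)\,\sigma \mid \varsigma$, where $\varsigma$ is a sub-state of one of the following forms. Point sub-states: $p\mapsto\alpha$ (unmatched), $\mathsf{Candidate}_p$ (matched), $\alpha$ (married/released action). Channel sub-states: $\odot_c$ (free), $\mathsf{Match}_c(p,q)$ (busy). Synchronizer sub-states: $\Box_s$ (open), $\boxtimes_s$ (closed), $\mathsf{Select}_s(p)$, $\mathsf{Reject}(p)$, $\mathsf{Done}_s(p)$, $\mathsf{Retry}_s$. Here $p,q$ range over point names, $c$ over channels, and a synchronizer $s$ is a finite partial function from points to actions, also written (and usable as a state) as the parallel composition of its bindings $p\mapsto\alpha$; distinct synchronizers have disjoint domains. Transitions $\to$ are given by the following rules, closed under the usual pi-calculus structural rules for parallel composition and name restriction (commutativity/associativity of $|$, scope extrusion, $\alpha$-renaming, and reduction under $|$ and $\nu$): (I) $p\mapsto c\,|\,q\mapsto\overline c\,|\,\odot_c\to\mathsf{Candidate}_p\,|\,\mathsf{Candidate}_q\,|\,\mathsf{Match}_c(p,q)$;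 (II.i) if $p\in\mathrm{dom}(s)$: $\mathsf{Candidate}_p\,|\,\Box_s\to\boxtimes_s\,|\,\mathsf{Select}_s(p)$; (II.ii) if $p\in\mathrm{dom}(s)$: $\mathsf{Candidate}_p\,|\,\boxtimes_s\to\boxtimes_s\,|\,\mathsf{Reject}(p)$; (III.i) $\mathsf{Select}_s(p)\,|\,\mathsf{Select}_{s'}(q)\,|\,\mathsf{Match}_c(p,q)\to\mathsf{Done}_s(p)\,|\,\mathsf{Done}_{s'}(q)\,|\,\odot_c$; (III.ii) $\mathsf{Select}_s(p)\,|\,\mathsf{Reject}(q)\,|\,\mathsf{Match}_c(p,q)\to\mathsf{Retry}_s\,|\,\odot_c$; (III.iii) $\mathsf{Reject}(p)\,|\,\mathsf{Select}_s(q)\,|\,\mathsf{Match}_c(p,q)\to\mathsf{Retry}_s\,|\,\odot_c$; (III.iv) $\mathsf{Reject}(p)\,|\,\mathsf{Reject}(q)\,|\,\mathsf{Match}_c(p,q)\to\odot_c$; (IV.i) if $s(p)=\alpha$: $\mathsf{Done}_s(p)\to\alpha$; (IV.ii) if $\mathrm{dom}(s)=\vec p$: $\mathsf{Retry}_s\to(\nu\vec p)(\Box_s\,|\,s)$. Compilation. For a program $S$ component: $\widehat\alpha=\alpha$, and $\widehat{\mathsf{select}(\vec{\alpha_j})}=(\nu\vec{p_j})(\Box_s\,|\,s)$ where $s=\Pi_j(p_j\mapsto\alpha_j)$ for fresh point names $\vec{p_j}$. The program $\Pi_{i\in1..n}S_i$ with channel set $\mathcal C$ compiles to $\Pi_{c\in\mathcal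 C}\odot_c\,|\,\Pi_{i\in1..n}\widehat{S_i}$. Denotations are multisets of actions: $\ulcorner S_1|\dots|S_n\urcorner=\ulcorner S_1\urcorner\uplus\dots\uplus\ulcorner S_n\urcorner$, $\ulcorner\alpha\urcorner=[\alpha]$, $\ulcorner\mathsf{select}(\vec\alpha)\urcorner=[]$; $\ulcorner\sigma|\sigma'\urcorner=\ulcorner\sigma\urcorner\uplus\ulcorner\sigma'\urcorner$, $\ulcorner(\nu p)\sigma\urcorner=\ulcorner\sigma\urcorner$, and for a sub-state $\ulcorner\varsigma\urcorner=[\alpha]$ if $\varsigma$ is an action $\alpha$ and $[]$ otherwise (in particular bindings $p\mapsto\alpha$ contribute nothing). $\to^\star$ and $\to^+$ denote reflexive-transitive and transitive closure. *)

(* Defs.v *)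
From Stdlib Require Import List Permutation Arith.
Import ListNotations.

Definition chan := nat.
Definition point := nat.

Inductive action : Type :=
| AIn : chan -> action
| AOut : chan -> action.

Definition chan_of (a : action) : chan :=
  match a with AIn c => c | AOut c => c end.

Inductive comp : Type :=
| CAct : action -> comp
| CSel : list action -> comp.

(* A program S_1 | ... | S_n is a list of components; parallel composition
   is taken modulo commutativity/associativity, i.e. lists up to Permutation. *)
Definition program := list comp.

Definition preduce (P Q : program) : Prop :=
  exists (al be : list action) (c : chan) (rest : program),
    Permutation P (CSel al :: CSel be :: rest) /\
    In (AIn c) al /\ In (AOut c) be /\
    Permutation Q (CAct (AIn c) :: CAct (AOut c) :: rest).

Inductive pstar : program -> program -> Prop :=
| pstar_refl : forall P, pstar P P
| pstar_step : forall P Q R, preduce P Q -> pstar Q R -> pstar P R.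

Definition comp_chans (S : comp) : list chan :=
  match S with
  | CAct a => [chan_of a]
  | CSel al => map chan_of al
  end.

Definition occurs (c : chan) (P : program) : Prop :=
  exists S, In S P /\ In c (comp_chans S).

(* a synchronizer: finite partial function from points to actions,
   given by its list of bindings *)
Definition sync := list (point * action).

Definition dom (s : sync) : list point := map fst s.

Inductive sub : Type :=
| SBind : point -> action -> sub
| SCand : point -> sub
| SAct : action -> sub
| SFree : chan -> sub                   (* odot_c *)
| SMatch : chan -> point -> point -> sub
| SOpen : sync -> sub
| SClosed : sync -> sub
| SSelect : sync -> point -> sub
| SReject : point -> sub
| SDone : sync -> point -> sub
| SRetry : sync -> sub.

Inductive state : Type :=
| Par : state -> state -> state
| Nu : point -> state -> state
| Sub : sub -> state.

Fixpoint parl (x : state) (ys : list state) : state :=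
  match ys with
  | [] => x
  | y :: ys' => Par x (parl y ys')
  end.

Fixpoint nus (ps : list point) (st : state) : state :=
  match ps with
  | [] => st
  | p :: ps' => Nu p (nus ps' st)
  end.

Definition bindings (s : sync) : list state :=
  map (fun pa => Sub (SBind (fst pa) (snd pa))) s.

Definition sub_fn (x : sub) : list point :=
  match x with
  | SBind p _ => [p]
  | SCand p => [p]
  | SAct _ => []
  | SFree _ => []
  | SMatch _ p q => [p; q]
  | SOpen s => dom s
  | SClosed s => dom s
  | SSelect s p => p :: dom s
  | SReject p => [p]
  | SDone s p => p :: dom s
  | SRetry s => dom s
  end.

Fixpoint fn (st : state) : list point :=
  match st with
  | Par a b => fn a ++ fn b
  | Nu p a => remove Nat.eq_dec p (fn a)
  | Sub x => sub_fn x
  end.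

Definition swp (p q r : point) : point :=
  if Nat.eq_dec r p then q else if Nat.eq_dec r q then p else r.

Definition swap_sync (p q : point) (s : sync) : sync :=
  map (fun pa => (swp p q (fst pa), snd pa)) s.

Definition swap_sub (p q : point) (x : sub) : sub :=
  match x with
  | SBind r a => SBind (swp p q r) a
  | SCand r => SCand (swp p q r)
  | SAct a => SAct a
  | SFree c => SFree c
  | SMatch c r t => SMatch c (swp p q r) (swp p q t)
  | SOpen s => SOpen (swap_sync p q s)
  | SClosed s => SClosed (swap_sync p q s)
  | SSelect s r => SSelect (swap_sync p q s) (swp p q r)
  | SReject r => SReject (swp p q r)
  | SDone s r => SDone (swap_sync p q s) (swp p q r)
  | SRetry s => SRetry (swap_sync p q s)
  end.

Fixpoint swap (p q : point) (st : state) : state :=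
  match st with
  | Par a b => Par (swap p q a) (swap p q b)
  | Nu r a => Nu (swp p q r) (swap p q a)
  | Sub x => Sub (swap_sub p q x)
  end.

Inductive scong : state -> state -> Prop :=
| sc_refl : forall a, scong a a
| sc_sym : forall a b, scong a b -> scong b a
| sc_trans : forall a b c, scong a b -> scong b c -> scong a c
| sc_par : forall a a' b b', scong a a' -> scong b b' -> scong (Par a b) (Par a' b')
| sc_nu : forall p a a', scong a a' -> scong (Nu p a) (Nu p a')
| sc_comm : forall a b, scong (Par a b) (Par b a)
| sc_assoc : forall a b c, scong (Par (Par a b) c) (Par a (Par b c))
| sc_extr : forall p a b, ~ In p (fn b) -> scong (Par (Nu p a) b) (Nu p (Par a b))
| sc_nu_comm : forall p q a, scong (Nu p (Nu q a)) (Nu q (Nu p a))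
| sc_alpha : forall p q a, ~ In q (fn (Nu p a)) -> scong (Nu p a) (Nu q (swap p q a)).

Inductive mstep : state -> state -> Prop :=
| r_I : forall p q c,
    mstep (Par (Sub (SBind p (AIn c))) (Par (Sub (SBind q (AOut c))) (Sub (SFree c))))
          (Par (Sub (SCand p)) (Par (Sub (SCand q)) (Sub (SMatch c p q))))
| r_IIi : forall p s, In p (dom s) ->
    mstep (Par (Sub (SCand p)) (Sub (SOpen s)))
          (Par (Sub (SClosed s)) (Sub (SSelect s p)))
| r_IIii : forall p s, In p (dom s) ->
    mstep (Par (Sub (SCand p)) (Sub (SClosed s)))
          (Par (Sub (SClosed s)) (Sub (SReject p)))
| r_IIIi : forall s s' p q c,
    mstep (Par (Sub (SSelect s p)) (Par (Sub (SSelect s' q)) (Sub (SMatch c p q))))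
          (Par (Sub (SDone s p)) (Par (Sub (SDone s' q)) (Sub (SFree c))))
| r_IIIii : forall s p q c,
    mstep (Par (Sub (SSelect s p)) (Par (Sub (SReject q)) (Sub (SMatch c p q))))
          (Par (Sub (SRetry s)) (Sub (SFree c)))
| r_IIIiii : forall s p q c,
    mstep (Par (Sub (SReject p)) (Par (Sub (SSelect s q)) (Sub (SMatch c p q))))
          (Par (Sub (SRetry s)) (Sub (SFree c)))
| r_IIIiv : forall p q c,
    mstep (Par (Sub (SReject p)) (Par (Sub (SReject q)) (Sub (SMatch c p q))))
          (Sub (SFree c))
| r_IVi : forall s p a, In (p, a) s ->
    mstep (Sub (SDone s p)) (Sub (SAct a))
| r_IVii : forall s,
    mstep (Sub (SRetry s)) (nus (dom s) (parl (Sub (SOpen s)) (bindings s)))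
| r_par : forall a a' b, mstep a a' -> mstep (Par a b) (Par a' b)
| r_nu : forall p a a', mstep a a' -> mstep (Nu p a) (Nu p a')
| r_struct : forall a a1 a2 a', scong a a1 -> mstep a1 a2 -> scong a2 a' -> mstep a a'.

Inductive mstar : state -> state -> Prop :=
| mstar_refl : forall a, mstar a a
| mstar_step : forall a b c, mstep a b -> mstar b c -> mstar a c.

Definition mplus (a c : state) : Prop := exists b, mstep a b /\ mstar b c.

Definition den_comp (S : comp) : list action :=
  match S with CAct a => [a] | CSel _ => [] end.

Definition den_prog (P : program) : list action := flat_map den_comp P.

Definition den_sub (x : sub) : list action :=
  match x with SAct a => [a] | _ => [] end.

Fixpoint den_state (st : state) : list action :=
  match st with
  | Par a b => den_state a ++ den_state b
  | Nu _ a => den_state a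
  | Sub x => den_sub x
  end.

Definition hat_sel (n : point) (al : list action) : state :=
  let ps := seq n (length al) in
  let s := combine ps al in
  nus ps (parl (Sub (SOpen s)) (bindings s)).

Fixpoint hat_comps (n : point) (P : program) : list state :=
  match P with
  | [] => []
  | CAct a :: P' => Sub (SAct a) :: hat_comps n P'
  | CSel al :: P' => hat_sel n al :: hat_comps (n + length al) P'
  end.

(* Pi_{c in C} odot_c | Pi_i hat S_i; the dummy case [] only arises for
   the empty program with no channels, which is excluded in the theorem. *)
Definition compile (C : list chan) (P : program) : state :=
  match map (fun c => Sub (SFree c)) C ++ hat_comps 0 P with
  | [] => Sub (SFree 0)
  | x :: xs => parl x xs
  end.

Definition is_sim (R : program -> state -> Prop) : Prop :=
  forall P st, R P st ->
    (exists st', mstar st st' /\ Permutation (den_prog P) (den_state st')) /\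
    (forall st', mstep st st' -> exists P', pstar P P' /\ R P' st') /\
    ((exists Q, preduce P Q) ->
       exists st' P', mplus st st' /\ preduce P P' /\ R P' st').

(* the largest such relation: union of all relations satisfying is_sim *)
Definition sim (P : program) (st : state) : Prop :=
  exists R, is_sim R /\ R P st.

(* Main.v *)
Require Import Defs.
From Stdlib Require Import List Permutation Arith Lia.
Import ListNotations.

Definition rn_sync (f : nat -> nat) (s : sync) : sync :=
  map (fun pa => (f (fst pa), snd pa)) s.

Definition rn (f : nat -> nat) (x : sub) : sub :=
  match x with
  | SBind p a => SBind (f p) a
  | SCand p => SCand (f p)
  | SAct a => SAct a
  | SFree c => SFree c
  | SMatch c p q => SMatch c (f p) (f q)
  | SOpen s => SOpen (rn_sync f s)
  | SClosed s => SClosed (rn_sync f s)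
  | SSelect s p => SSelect (rn_sync f s) (f p)
  | SReject p => SReject (f p)
  | SDone s p => SDone (rn_sync f s) (f p)
  | SRetry s => SRetry (rn_sync f s)
  end.

Lemma dom_rn f s : dom (rn_sync f s) = map f (dom s).
Proof. unfold dom, rn_sync. rewrite !map_map. reflexivity. Qed.

Lemma snd_rn f s : map snd (rn_sync f s) = map snd s.
Proof. unfold rn_sync. rewrite map_map. reflexivity. Qed.

Lemma rn_sync_ext f g s : (forall n, In n (dom s) -> f n = g n) -> rn_sync f s = rn_sync g s.
Proof.
  intro H. unfold rn_sync. apply map_ext_in. intros [p a] Hi. simpl.
  rewrite H; auto. unfold dom. apply in_map_iff. exists (p,a); auto.
Qed.

Lemma rn_sync_comp f g s : rn_sync f (rn_sync g s) = rn_sync (fun n => f (g n)) s.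
Proof. unfold rn_sync. rewrite map_map. reflexivity. Qed.

Lemma rn_sync_id f s : (forall n, In n (dom s) -> f n = n) -> rn_sync f s = s.
Proof.
  intro H. unfold rn_sync. rewrite <- (map_id s) at 2. apply map_ext_in.
  intros [p a] Hi. simpl. rewrite H; auto. unfold dom. apply in_map_iff. exists (p,a); auto.
Qed.

Lemma sub_fn_rn f x : sub_fn (rn f x) = map f (sub_fn x).
Proof. destruct x; simpl; try rewrite dom_rn; reflexivity. Qed.

Lemma rn_ext f g x : (forall n, In n (sub_fn x) -> f n = g n) -> rn f x = rn g x.
Proof.
  intro H; destruct x; simpl in *;
  try (rewrite (rn_sync_ext f g); [|intros; apply H; auto]);
  try (rewrite H; [|auto]); try (rewrite (H n0); [|auto]); try reflexivity.
  - rewrite (H p0); auto.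
Qed.

Lemma rn_id f x : (forall n, In n (sub_fn x) -> f n = n) -> rn f x = x.
Proof.
  intro H. transitivity (rn (fun n => n) x).
  - apply rn_ext. auto.
  - destruct x; simpl; try rewrite (rn_sync_id (fun n => n)); auto.
Qed.

Lemma rn_comp f g x : rn f (rn g x) = rn (fun n => f (g n)) x.
Proof. destruct x; simpl; try rewrite rn_sync_comp; reflexivity. Qed.

Lemma swap_sub_rn p q x : swap_sub p q x = rn (swp p q) x.
Proof. destruct x; reflexivity. Qed.

Definition names (L : list sub) : list nat := flat_map sub_fn L.

Lemma names_app L1 L2 : names (L1 ++ L2) = names L1 ++ names L2.
Proof. unfold names. apply flat_map_app. Qed.

Lemma names_map f L : names (map (rn f) L) = map f (names L).
Proof.
  induction L; simpl; auto. unfold names in *. simpl. rewrite map_app, IHL, sub_fn_rn. reflexivity.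
Qed.

Lemma in_names x L n : In x L -> In n (sub_fn x) -> In n (names L).
Proof. intros. unfold names. apply in_flat_map. eauto. Qed.

Lemma map_rn_ext f g L : (forall n, In n (names L) -> f n = g n) -> map (rn f) L = map (rn g) L.
Proof.
  intro H. apply map_ext_in. intros x Hx. apply rn_ext. intros. apply H. eapply in_names; eauto.
Qed.

Lemma map_rn_comp f g L : map (rn f) (map (rn g) L) = map (rn (fun n => f (g n))) L.
Proof. rewrite map_map. apply map_ext. intros. apply rn_comp. Qed.

Lemma map_rn_id f L : (forall n, In n (names L) -> f n = n) -> map (rn f) L = L.
Proof.
  intro H. rewrite <- (map_id L) at 2. apply map_ext_in. intros. apply rn_id.
  intros. apply H. eapply in_names; eauto.
Qed.

Lemma Permutation_names L1 L2 : Permutation L1 L2 -> Permutation (names L1) (names L2).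
Proof. intro H. unfold names. induction H; simpl; auto.
  - apply Permutation_app_head; auto.
  - rewrite !app_assoc. apply Permutation_app_tail. apply Permutation_app_comm.
  - eapply Permutation_trans; eauto.
Qed.

Lemma swp_invol p q r : swp p q (swp p q r) = r.
Proof. unfold swp. repeat (destruct Nat.eq_dec; subst; try lia; auto). Qed.

Lemma swp_inj p q r1 r2 : swp p q r1 = swp p q r2 -> r1 = r2.
Proof. intro H. rewrite <- (swp_invol p q r1), <- (swp_invol p q r2), H. reflexivity. Qed.

Lemma swp_same p r : swp p p r = r.
Proof. unfold swp. repeat (destruct Nat.eq_dec; subst; auto). Qed.

Lemma swp_l p q : swp p q p = q.
Proof. unfold swp. destruct Nat.eq_dec; congruence. Qed.
Lemma swp_r p q : swp p q q = p.
Proof. unfold swp. repeat destruct Nat.eq_dec; congruence. Qed.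
Lemma swp_o p q r : r <> p -> r <> q -> swp p q r = r.
Proof. intros. unfold swp. repeat destruct Nat.eq_dec; congruence. Qed.

Lemma swp_conj f p q n : (forall x y, f x = f y -> x = y) ->
  f (swp p q n) = swp (f p) (f q) (f n).
Proof.
  intro Hf. unfold swp at 1.
  destruct (Nat.eq_dec n p). subst. rewrite swp_l. auto.
  destruct (Nat.eq_dec n q). subst. rewrite swp_r. auto.
  rewrite swp_o; auto; intro E; apply Hf in E; auto.
Qed.

Lemma odd_2k1 k : Nat.odd (2*k+1) = true.
Proof. apply Nat.odd_odd. Qed.
Lemma odd_2k k : Nat.odd (2*k) = false.
Proof. apply Nat.odd_even. Qed.

Definition dbl (n : nat) := 2 * n.
Definition enc := rn dbl.

Lemma fresh_odd (l : list nat) : exists k, ~ In (2*k+1) l.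
Proof.
  exists (list_sum l). intro H.
  assert (forall x, In x l -> x <= list_sum l).
  { clear. induction l; simpl; intros; [contradiction|]. destruct H; subst; try lia.
    specialize (IHl x H). lia. }
  apply H0 in H. lia.
Qed.

Definition disj (La Lb : list sub) : Prop :=
  forall n, In n (names La) -> Nat.odd n = true -> ~ In n (names Lb).

Inductive Inst : state -> list sub -> Prop :=
| I_sub x : Inst (Sub x) [enc x]
| I_par a b La Lb : Inst a La -> Inst b Lb -> disj La Lb -> Inst (Par a b) (La ++ Lb)
| I_nu p a La k : Inst a La -> ~ In (2*k+1) (names La) ->
    Inst (Nu p a) (map (rn (swp (2*p) (2*k+1))) La).

Lemma disj_sym La Lb : disj La Lb -> disj Lb La.
Proof. unfold disj. intros H n H1 H2 H3. exact (H n H3 H2 H1). Qed.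

Lemma disj_perm La Lb La' Lb' : Permutation La La' -> Permutation Lb Lb' -> disj La Lb -> disj La' Lb'.
Proof.
  unfold disj. intros P1 P2 H n H1 H2 H3.
  apply (H n); auto.
  - apply (Permutation_in _ (Permutation_sym (Permutation_names _ _ P1))); auto.
  - apply (Permutation_in _ (Permutation_sym (Permutation_names _ _ P2))); auto.
Qed.

Lemma disj_app_l La Lb Lc : disj (La ++ Lb) Lc <-> disj La Lc /\ disj Lb Lc.
Proof.
  unfold disj; split.
  - intro H; split; intros n H1; apply H; rewrite names_app; apply in_or_app; auto.
  - intros [H1 H2] n Hn. rewrite names_app in Hn. apply in_app_or in Hn as [Hn|Hn]; auto.
Qed.

Lemma disj_app_r La Lb Lc : disj La (Lb ++ Lc) <-> disj La Lb /\ disj La Lc.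
Proof.
  unfold disj; split.
  - intro H; split; intros n H1 H2 H3; apply (H n H1 H2); rewrite names_app; apply in_or_app; auto.
  - intros [H1 H2] n Hn Ho Hc. rewrite names_app in Hc. apply in_app_or in Hc as [Hc|Hc].
    + exact (H1 n Hn Ho Hc).
    + exact (H2 n Hn Ho Hc).
Qed.

Lemma inst_free a L : Inst a L -> forall p, In (2*p) (names L) -> In p (fn a).
Proof.
  induction 1; intros q Hq; simpl.
  - unfold enc in Hq. unfold names in Hq. simpl in Hq. rewrite app_nil_r, sub_fn_rn in Hq.
    apply in_map_iff in Hq as [m [E Hm]]. unfold dbl in E. assert (m = q) by lia. subst; simpl; auto.
  - rewrite names_app in Hq. apply in_or_app. apply in_app_or in Hq as [Hq|Hq]; auto.
  - rewrite names_map in Hq. apply in_map_iff in Hq as [m [E Hm]].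
    unfold swp in E. destruct (Nat.eq_dec m (2*p)); [lia|].
    destruct (Nat.eq_dec m (2*k+1)); [subst; contradiction|]. subst m.
    apply in_in_remove; try lia; auto.
Qed.

Lemma swp_dbl_even p q n : swp (2*p) (2*q) (2*n) = 2 * swp p q n.
Proof. unfold swp. repeat destruct Nat.eq_dec; lia. Qed.

Lemma swp_dbl_odd p q m : Nat.odd m = true -> swp (2*p) (2*q) m = m.
Proof.
  intro H. apply swp_o; intro E; subst; rewrite odd_2k in H; discriminate.
Qed.

Lemma swp_dbl_parity p q m : Nat.odd (swp (2*p) (2*q) m) = Nat.odd m.
Proof.
  unfold swp. destruct Nat.eq_dec; subst. rewrite !odd_2k; auto.
  destruct Nat.eq_dec; subst; rewrite ?odd_2k; auto.
Qed.

Lemma swp_inj_f p q : forall x y, swp p q x = swp p q y -> x = y.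
Proof. intros. eapply swp_inj; eauto. Qed.

Lemma inst_swap a L : Inst a L -> forall p q, Inst (swap p q a) (map (rn (swp (2*p) (2*q))) L).
Proof.
  induction 1; intros p' q'; cbn [swap map].
  - replace (rn (swp (2 * p') (2 * q')) (enc x)) with (enc (swap_sub p' q' x)); [constructor|].
    unfold enc. rewrite swap_sub_rn, !rn_comp. apply rn_ext. intros. unfold dbl. rewrite swp_dbl_even. auto.
  - rewrite map_app. constructor; auto.
    unfold disj in *. intros n Hn Ho Hc. rewrite names_map in Hn, Hc.
    apply in_map_iff in Hn as [m [E Hm]]. subst n. rewrite swp_dbl_parity in Ho.
    rewrite swp_dbl_odd in Hc by auto. apply in_map_iff in Hc as [m' [E' Hm']].
    rewrite <- (swp_dbl_odd p' q' m) in E' by auto. apply swp_inj in E'. subst. eapply H1; eauto.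
  - rewrite map_rn_comp.
    replace (map (rn (fun n => swp (2 * p') (2 * q') (swp (2 * p) (2 * k + 1) n))) La)
      with (map (rn (swp (2 * swp p' q' p) (2*k+1))) (map (rn (swp (2 * p') (2 * q'))) La)).
    + constructor; auto. rewrite names_map. intro Hc. apply in_map_iff in Hc as [m [E Hm]].
      rewrite <- (swp_dbl_odd p' q' (2*k+1)) in E by apply odd_2k1. apply swp_inj in E. subst. contradiction.
    + rewrite map_rn_comp. apply map_rn_ext. intros n _.
      rewrite (swp_conj (swp (2*p') (2*q'))) by apply swp_inj_f.
      rewrite swp_dbl_even, (swp_dbl_odd p' q' (2*k+1)) by apply odd_2k1. reflexivity.
Qed.

Lemma swap_swap p q a : swap p q (swap p q a) = a.
Proof.
  induction a; simpl; try congruence.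
  - rewrite swp_invol, IHa; auto.
  - rewrite !swap_sub_rn, rn_comp. f_equal. apply rn_id. intros. apply swp_invol.
Qed.

Lemma names_enc x : names [enc x] = map dbl (sub_fn x).
Proof. unfold names, enc; simpl. rewrite app_nil_r, sub_fn_rn. auto. Qed.

Lemma inst_nonempty a L : Inst a L -> L <> [].
Proof. induction 1; try discriminate. destruct La; [contradiction|discriminate]. destruct La; [contradiction|discriminate]. Qed.

Lemma I_nu' p a La k L : Inst a La -> ~ In (2*k+1) (names La) ->
  L = map (rn (swp (2*p) (2*k+1))) La -> Inst (Nu p a) L.
Proof. intros; subst; constructor; auto. Qed.

Lemma I_par' a b La Lb L : Inst a La -> Inst b Lb -> disj La Lb -> L = La ++ Lb -> Inst (Par a b) L.
Proof. intros; subst; constructor; auto. Qed.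

Lemma names_swp_img p k L : In (2*p) (names L) -> In (2*k+1) (names (map (rn (swp (2*p) (2*k+1))) L)).
Proof. intro H. rewrite names_map. apply in_map_iff. exists (2*p). split; auto. apply swp_l. Qed.

Lemma not_in_img p k L n : ~ In n (names L) -> n <> 2*p -> n <> 2*k+1 ->
  ~ In n (names (map (rn (swp (2*p) (2*k+1))) L)).
Proof.
  intros H1 H2 H3 H. rewrite names_map in H. apply in_map_iff in H as [m [E Hm]].
  unfold swp in E. destruct Nat.eq_dec; subst; [congruence|].
  destruct Nat.eq_dec; subst; [congruence|]. contradiction.
Qed.

Lemma odd_img p k L n : In n (names (map (rn (swp (2*p) (2*k+1))) L)) -> Nat.odd n = true ->
  n = 2*k+1 \/ (In n (names L) /\ n <> 2*k+1).
Proof.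
  intros H Ho. rewrite names_map in H. apply in_map_iff in H as [m [E Hm]].
  unfold swp in E. destruct Nat.eq_dec; subst; auto.
  destruct Nat.eq_dec; subst. rewrite odd_2k in Ho; discriminate. auto.
Qed.

Lemma extr_lr p a b L : ~ In p (fn b) -> Inst (Par (Nu p a) b) L -> Inst (Nu p (Par a b)) L.
Proof.
  intros Hp H. inversion H; subst. inversion H2; subst. rename La0 into La.
  assert (Hb2 : ~ In (2*p) (names Lb)) by (intro; apply Hp; eapply inst_free; eauto).
  destruct (in_dec Nat.eq_dec (2*p) (names La)) as [Hin|Hin].
  - assert (HK : ~ In (2*k+1) (names Lb)).
    { apply (H5 (2*k+1)). apply names_swp_img; auto. apply odd_2k1. }
    apply (I_nu' p (Par a b) (La ++ Lb) k).
    + constructor; auto. intros n Hn Ho Hc. apply (H5 n); auto.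
      rewrite names_map. apply in_map_iff. exists n; split; auto.
      apply swp_o. intro; subst; rewrite odd_2k in Ho; discriminate.
      intro; subst; contradiction.
    + rewrite names_app. intro Hc; apply in_app_or in Hc as [Hc|Hc]; contradiction.
    + rewrite map_app. f_equal. symmetry. apply map_rn_id. intros n Hn. apply swp_o; intro; subst; contradiction.
  - destruct (fresh_odd (names (La ++ Lb))) as [k' Hk'].
    apply (I_nu' p (Par a b) (La ++ Lb) k').
    + constructor; auto. intros n Hn Ho Hc. apply (H5 n); auto.
      rewrite names_map. apply in_map_iff. exists n; split; auto.
      apply swp_o. intro; subst; contradiction. intro; subst; contradiction.
    + auto.
    + rewrite map_app. rewrite !map_rn_id; auto.
      * intros n Hn. apply swp_o; intro; subst; [contradiction|]. apply Hk'. rewrite names_app; apply in_or_app; auto.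
      * intros n Hn. apply swp_o; intro; subst; [contradiction|]. apply Hk'. rewrite names_app; apply in_or_app; auto.
      * intros n Hn. apply swp_o; intro; subst; contradiction.
Qed.

Lemma extr_rl p a b L : ~ In p (fn b) -> Inst (Nu p (Par a b)) L -> Inst (Par (Nu p a) b) L.
Proof.
  intros Hp H. inversion H; subst. inversion H2; subst. rename La0 into La.
  assert (Hb2 : ~ In (2*p) (names Lb)) by (intro; apply Hp; eapply inst_free; eauto).
  rewrite names_app in H4.
  assert (HKa : ~ In (2*k+1) (names La)) by (intro; apply H4; apply in_or_app; auto).
  assert (HKb : ~ In (2*k+1) (names Lb)) by (intro; apply H4; apply in_or_app; auto).
  rewrite map_app. rewrite (map_rn_id _ Lb).
  - constructor; auto. constructor; auto.
    intros n Hn Ho. apply odd_img in Hn as [E|[Hn E]]; auto. subst; auto.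
  - intros n Hn. apply swp_o; intro; subst; contradiction.
Qed.

Lemma nucomm p q a L : Inst (Nu p (Nu q a)) L -> Inst (Nu q (Nu p a)) L.
Proof.
  intro H. destruct (Nat.eq_dec p q). subst; auto.
  inversion H; subst. inversion H2; subst. rename La0 into La. rename k0 into k2. rename k into k1.
  destruct (Nat.eq_dec k1 k2) as [Ek|Ek].
  - subst k2.
    assert (Hq : ~ In (2*q) (names La)) by (intro Hc; apply H4; apply names_swp_img; auto).
    assert (Eq : map (rn (swp (2 * q) (2 * k1 + 1))) La = La).
    { apply map_rn_id. intros m Hm. apply swp_o; intro; subst; contradiction. }
    rewrite Eq in *.
    destruct (fresh_odd (names (map (rn (swp (2 * p) (2 * k1 + 1))) La))) as [k3 Hk3].
    apply (I_nu' q (Nu p a) (map (rn (swp (2 * p) (2 * k1 + 1))) La) k3); auto.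
    + constructor; auto.
    + symmetry. apply map_rn_id. intros m Hm. apply swp_o; intro; subst; [|contradiction].
      revert Hm. apply not_in_img; auto; lia.
  - assert (HK1 : ~ In (2*k1+1) (names La)).
    { intro Hc; apply H4. rewrite names_map. apply in_map_iff. exists (2*k1+1). split; auto.
      apply swp_o; lia. }
    apply (I_nu' q (Nu p a) (map (rn (swp (2 * p) (2 * k1 + 1))) La) k2).
    + constructor; auto.
    + apply not_in_img; auto; lia.
    + rewrite !map_rn_comp. apply map_rn_ext. intros x _. unfold swp.
      repeat (destruct Nat.eq_dec); lia.
Qed.

Lemma alpha_lr p q a L : ~ In q (fn (Nu p a)) -> Inst (Nu p a) L -> Inst (Nu q (swap p q a)) L.
Proof.
  intros Hq H. inversion H; subst.
  apply (I_nu' q _ (map (rn (swp (2*p) (2*q))) La) k).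
  - apply inst_swap; auto.
  - rewrite names_map. intro Hc. apply in_map_iff in Hc as [m [E Hm]].
    rewrite <- (swp_dbl_odd p q (2*k+1)) in E by apply odd_2k1. apply swp_inj in E. subst. contradiction.
  - rewrite map_rn_comp. destruct (Nat.eq_dec p q).
    + subst. apply map_rn_ext. intros. rewrite swp_same. auto.
    + assert (~ In (2*q) (names La)).
      { intro Hc. apply Hq. simpl. apply in_in_remove; auto. eapply inst_free; eauto. }
      apply map_rn_ext. intros m Hm. unfold swp. repeat destruct Nat.eq_dec; subst; try lia; auto; contradiction.
Qed.

Lemma alpha_rl p q a L : ~ In q (fn (Nu p a)) -> Inst (Nu q (swap p q a)) L -> Inst (Nu p a) L.
Proof.
  intros Hq H. inversion H; subst. rename La into Lq.
  pose proof (inst_swap _ _ H2 p q) as Ha. rewrite swap_swap in Ha.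
  apply (I_nu' p _ _ k _ Ha).
  - rewrite names_map. intro Hc. apply in_map_iff in Hc as [m [E Hm]].
    rewrite <- (swp_dbl_odd p q (2*k+1)) in E by apply odd_2k1. apply swp_inj in E. subst. contradiction.
  - rewrite map_rn_comp. destruct (Nat.eq_dec p q).
    + subst. apply map_rn_ext. intros. rewrite swp_same. auto.
    + assert (~ In (2*p) (names Lq)).
      { intro Hc. apply Hq. simpl. apply in_in_remove; auto. eapply inst_free; eauto.
        rewrite names_map. apply in_map_iff. exists (2*p). split; auto. apply swp_l. }
      apply map_rn_ext. intros m Hm. unfold swp. repeat destruct Nat.eq_dec; subst; try lia; auto; contradiction.
Qed.

Lemma inst_scong a b : scong a b ->
  (forall L, Inst a L -> exists L', Inst b L' /\ Permutation L L') /\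
  (forall L, Inst b L -> exists L', Inst a L' /\ Permutation L L').
Proof.
  induction 1.
  - split; eauto.
  - tauto.
  - destruct IHscong1 as [H1 H2], IHscong2 as [H3 H4]. split; intros L HL.
    + destruct (H1 _ HL) as [L1 [HL1 P1]]. destruct (H3 _ HL1) as [L2 [HL2 P2]]. eauto using Permutation_trans.
    + destruct (H4 _ HL) as [L1 [HL1 P1]]. destruct (H2 _ HL1) as [L2 [HL2 P2]]. eauto using Permutation_trans.
  - destruct IHscong1 as [H1 H2], IHscong2 as [H3 H4]. split; intros L HL; inversion HL; subst.
    + destruct (H1 _ H7) as [La' [? ?]]. destruct (H3 _ H8) as [Lb' [? ?]].
      exists (La' ++ Lb'). split. constructor; auto. eapply disj_perm; eauto. apply Permutation_app; auto.
    + destruct (H2 _ H7) as [La' [? ?]]. destruct (H4 _ H8) as [Lb' [? ?]].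
      exists (La' ++ Lb'). split. constructor; auto. eapply disj_perm; eauto. apply Permutation_app; auto.
  - destruct IHscong as [H1 H2]. split; intros L HL; inversion HL as [| |? ? La k HLa HK]; subst.
    + destruct (H1 _ HLa) as [L' [HL' HP]]. exists (map (rn (swp (2*p) (2*k+1))) L'); split. apply I_nu; auto.
      intro Hc; apply HK. apply (Permutation_in _ (Permutation_sym (Permutation_names _ _ HP))); auto.
      apply Permutation_map; auto.
    + destruct (H2 _ HLa) as [L' [HL' HP]]. exists (map (rn (swp (2*p) (2*k+1))) L'); split. apply I_nu; auto.
      intro Hc; apply HK. apply (Permutation_in _ (Permutation_sym (Permutation_names _ _ HP))); auto.
      apply Permutation_map; auto.
  - split; intros L HL; inversion HL; subst; eexists; (split; [constructor; eauto; apply disj_sym; auto|apply Permutation_app_comm]).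
  - split; intros L HL; inversion HL as [|a0 b0 La Lb HLa HLb HD|]; subst.
    + inversion HLa as [|a1 b1 La1 Lb1 H1 H2 HD1|]; subst. apply disj_app_l in HD as [D1 D2].
      exists (La1 ++ Lb1 ++ Lb). split. constructor; auto. constructor; auto.
      apply disj_app_r; auto. rewrite app_assoc; auto.
    + inversion HLb as [|a1 b1 La1 Lb1 H1 H2 HD1|]; subst. apply disj_app_r in HD as [D1 D2].
      exists ((La ++ La1) ++ Lb1). split. constructor; auto. constructor; auto.
      apply disj_app_l; auto. rewrite app_assoc; auto.
  - split; intros L HL; exists L; split; auto. apply extr_lr; auto. apply extr_rl; auto.
  - split; intros L HL; exists L; split; auto; apply nucomm; auto.
  - split; intros L HL; exists L; split; auto. apply alpha_lr; auto. eapply alpha_rl; eauto.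
Qed.

Fixpoint parlS (l : list sub) : state :=
  match l with
  | [] => Sub (SFree 0)
  | [x] => Sub x
  | x :: l' => Par (Sub x) (parlS l')
  end.

Definition bindsA (s : sync) : list sub := map (fun pa => SBind (fst pa) (snd pa)) s.

Inductive RawRule : list sub -> list sub -> Prop :=
| RR_I p q c : RawRule [SBind p (AIn c); SBind q (AOut c); SFree c] [SCand p; SCand q; SMatch c p q]
| RR_IIi p s : In p (dom s) -> RawRule [SCand p; SOpen s] [SClosed s; SSelect s p]
| RR_IIii p s : In p (dom s) -> RawRule [SCand p; SClosed s] [SClosed s; SReject p]
| RR_IIIi s s' p q c : RawRule [SSelect s p; SSelect s' q; SMatch c p q] [SDone s p; SDone s' q; SFree c]
| RR_IIIii s p q c : RawRule [SSelect s p; SReject q; SMatch c p q] [SRetry s; SFree c]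
| RR_IIIiii s p q c : RawRule [SReject p; SSelect s q; SMatch c p q] [SRetry s; SFree c]
| RR_IIIiv p q c : RawRule [SReject p; SReject q; SMatch c p q] [SFree c]
| RR_IVi s p a : In (p, a) s -> RawRule [SDone s p] [SAct a].

Definition Rule (X : list nat) (lhs rhs : list sub) : Prop :=
  RawRule lhs rhs \/
  exists s s', lhs = [SRetry s] /\ rhs = SOpen s' :: bindsA s' /\ map snd s' = map snd s /\
    (NoDup (dom s) -> NoDup (dom s')) /\ (forall n, In n (dom s') -> ~ In n X).

Definition AStep (X : list nat) (L L' : list sub) : Prop :=
  exists lhs rhs rest, Rule (X ++ names rest) lhs rhs /\ Permutation L (lhs ++ rest) /\ Permutation L' (rhs ++ rest).

Lemma rawrule_step l r : RawRule l r -> mstep (parlS l) (parlS r).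
Proof. destruct 1; simpl; constructor; auto. Qed.

Lemma in_dom_rn f p s : In p (dom s) -> In (f p) (dom (rn_sync f s)).
Proof. intro. rewrite dom_rn. apply in_map; auto. Qed.

Lemma in_rn_sync f p a s : In (p, a) s -> In (f p, a) (rn_sync f s).
Proof. intro. unfold rn_sync. apply in_map_iff. exists (p,a); auto. Qed.

Lemma rawrule_rn f l r : RawRule l r -> RawRule (map (rn f) l) (map (rn f) r).
Proof.
  destruct 1; simpl; constructor; auto using in_dom_rn, in_rn_sync.
Qed.

Lemma rawrule_names l r : RawRule l r -> incl (names r) (names l).
Proof.
  destruct 1; unfold names; simpl; intros n Hn; repeat (simpl in *; rewrite ?app_nil_r, ?in_app_iff in * ); tauto.
Qed.

Lemma Rule_mono X Y l r : Rule X l r -> incl Y X -> Rule Y l r.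
Proof.
  intros [H|[s [s' [E1 [E2 [E3 [E4 E5]]]]]]] Hi; [left; auto|right].
  exists s, s'. repeat split; auto. intros n Hn Hc. apply (E5 n Hn). apply Hi; auto.
Qed.

Lemma bindsA_rn f s : map (rn f) (bindsA s) = bindsA (rn_sync f s).
Proof. unfold bindsA, rn_sync. rewrite !map_map. reflexivity. Qed.

Lemma NoDup_map_inj {A B} (f : A -> B) l : (forall x y, f x = f y -> x = y) -> NoDup l -> NoDup (map f l).
Proof. intros Hf H. induction H; simpl; constructor; auto. intro Hc. apply in_map_iff in Hc as [y [E Hy]].
  apply Hf in E; subst; auto. Qed.

Lemma Rule_rn f X l r : (forall x y, f x = f y -> x = y) -> Rule X l r ->
  Rule (map f X) (map (rn f) l) (map (rn f) r).
Proof.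
  intros Hf [H|[s [s' [E1 [E2 [E3 [E4 E5]]]]]]]; [left; apply rawrule_rn; auto|right]. subst.
  exists (rn_sync f s), (rn_sync f s'). simpl. rewrite bindsA_rn. repeat split; auto.
  - rewrite !snd_rn; auto.
  - rewrite !dom_rn. intro H. apply NoDup_map_inv in H. apply NoDup_map_inj; auto.
  - intros n Hn Hc. rewrite dom_rn in Hn. apply in_map_iff in Hn as [m [E Hm]]. subst.
    apply in_map_iff in Hc as [m' [E Hm']]. apply Hf in E. subst. apply (E5 m); auto.
Qed.

Lemma AStep_perm X L1 L2 L1' L2' : AStep X L1 L2 -> Permutation L1 L1' -> Permutation L2 L2' -> AStep X L1' L2'.
Proof.
  intros [lhs [rhs [rest [H1 [H2 H3]]]]] P1 P2. exists lhs, rhs, rest. repeat split; auto.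
  eapply Permutation_trans; [apply Permutation_sym; eauto|auto].
  eapply Permutation_trans; [apply Permutation_sym; eauto|auto].
Qed.

Lemma AStep_mono X Y L L' : AStep X L L' -> incl Y X -> AStep Y L L'.
Proof.
  intros [lhs [rhs [rest [H1 [H2 H3]]]]] Hi. exists lhs, rhs, rest. repeat split; auto.
  eapply Rule_mono; eauto. intros n Hn. apply in_app_iff in Hn as [Hn|Hn]; apply in_app_iff; auto.
Qed.

Lemma AStep_rn f X L L' : (forall x y, f x = f y -> x = y) -> AStep X L L' ->
  AStep (map f X) (map (rn f) L) (map (rn f) L').
Proof.
  intros Hf [lhs [rhs [rest [H1 [H2 H3]]]]]. exists (map (rn f) lhs), (map (rn f) rhs), (map (rn f) rest).
  repeat split.
  - rewrite names_map, <- map_app. apply Rule_rn; auto.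
  - rewrite <- map_app. apply Permutation_map; auto.
  - rewrite <- map_app. apply Permutation_map; auto.
Qed.

Lemma AStep_app X L L' Lb : AStep (X ++ names Lb) L L' -> AStep X (L ++ Lb) (L' ++ Lb).
Proof.
  intros [lhs [rhs [rest [H1 [H2 H3]]]]]. exists lhs, rhs, (rest ++ Lb). repeat split.
  - eapply Rule_mono; eauto. intros n Hn. rewrite names_app in Hn. rewrite !in_app_iff in *. tauto.
  - rewrite app_assoc. apply Permutation_app_tail; auto.
  - rewrite app_assoc. apply Permutation_app_tail; auto.
Qed.

Lemma inst_parlS_inv l La : l <> [] -> Inst (parlS l) La -> La = map enc l.
Proof.
  revert La; induction l as [|x l IH]; intros La Hne H; [congruence|].
  destruct l as [|y l].
  - simpl in H. inversion H; subst; auto.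
  - change (parlS (x :: y :: l)) with (Par (Sub x) (parlS (y :: l))) in H.
    inversion H; subst. inversion H2; subst. rewrite (IH Lb ltac:(discriminate) H3). reflexivity.
Qed.

Lemma names_enc_even l n : In n (names (map enc l)) -> Nat.odd n = false.
Proof.
  intro H. unfold enc in H. rewrite names_map in H. apply in_map_iff in H as [m [E _]]. subst.
  unfold dbl. apply odd_2k.
Qed.

Lemma inst_parlS l : l <> [] -> Inst (parlS l) (map enc l).
Proof.
  induction l as [|x l IH]; intros Hne; [congruence|].
  destruct l as [|y l].
  - constructor.
  - change (parlS (x :: y :: l)) with (Par (Sub x) (parlS (y :: l))).
    change (map enc (x :: y :: l)) with ([enc x] ++ map enc (y :: l)). constructor.
    + constructor.
    + apply IH. discriminate.
    + intros n Hn Ho. apply (names_enc_even [x]) in Hn. congruence.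
Qed.

Lemma rawrule_ne l r : RawRule l r -> l <> [] /\ r <> [].
Proof. destruct 1; split; discriminate. Qed.

Definition FreshRes (X : list nat) (La La' : list sub) : Prop :=
  forall n, In n (names La') -> In n (names La) \/ (Nat.odd n = true /\ ~ In n X).

Lemma fwd_raw l r X La : RawRule l r -> Inst (parlS l) La ->
  exists La', Inst (parlS r) La' /\ AStep X La La' /\ FreshRes X La La'.
Proof.
  intros HR HI. destruct (rawrule_ne _ _ HR) as [N1 N2].
  apply inst_parlS_inv in HI; auto. subst. exists (map enc r). repeat split.
  - apply inst_parlS; auto.
  - exists (map enc l), (map enc r), []. repeat split; rewrite ?app_nil_r; auto.
    left. apply rawrule_rn; auto.
  - intros n Hn. left. unfold enc in *. rewrite names_map in *. apply in_map_iff in Hn as [m [E Hm]].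
    subst. apply in_map. apply (rawrule_names _ _ HR); auto.
Qed.

Lemma inst_nus D t Lt X : Inst t Lt -> exists f, (forall x y, f x = f y -> x = y) /\
  Inst (nus D t) (map (rn f) Lt) /\
  (forall n, In n (names Lt) ->
     (In n (map dbl D) /\ Nat.odd (f n) = true /\ ~ In (f n) X /\ ~ In (f n) (names Lt)) \/
     (~ In n (map dbl D) /\ f n = n)).
Proof.
  intro HI. induction D as [|d D IH].
  - exists (fun n => n). repeat split; auto. simpl. rewrite map_rn_id; auto.
  - destruct IH as [f' [Hinj [HI' Hp]]].
    destruct (fresh_odd (names (map (rn f') Lt) ++ X ++ names Lt)) as [k Hk].
    rewrite !in_app_iff in Hk.
    exists (fun n => swp (2*d) (2*k+1) (f' n)). repeat split.
    + intros x y E. apply swp_inj in E. auto.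
    + simpl. apply (I_nu' d _ (map (rn f') Lt) k); auto. rewrite map_rn_comp. auto.
    + intros n Hn. destruct (Hp n Hn) as [[A1 [A2 [A3 A4]]]|[A1 A2]].
      * left. rewrite swp_o. repeat split; auto. simpl; auto.
        -- intro E. rewrite E, odd_2k in A2. discriminate.
        -- intro E. apply Hk. left. rewrite <- E. rewrite names_map. apply in_map. auto.
      * rewrite A2. destruct (Nat.eq_dec n (2*d)).
        -- subst. left. rewrite swp_l. repeat split; simpl; auto. apply odd_2k1.
        -- right. rewrite swp_o; auto. split; auto. simpl. intros [E|E]; auto.
           intro E; subst; auto.
Qed.

Lemma parl_parlS x l : parl (Sub x) (map Sub l) = parlS (x :: l).
Proof.
  revert x; induction l as [|y l IH]; intro x; auto. simpl. rewrite IH. destruct l; reflexivity.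
Qed.

Lemma names_bindsA s : names (bindsA s) = dom s.
Proof. induction s as [|[p a] s IH]; auto. simpl. unfold names in *. simpl. rewrite IH. auto. Qed.

Lemma fwd_retry s X La : Inst (Sub (SRetry s)) La ->
  exists La', Inst (nus (dom s) (parl (Sub (SOpen s)) (bindings s))) La' /\ AStep X La La' /\ FreshRes X La La'.
Proof.
  intro HI. inversion HI; subst.
  assert (Eb : bindings s = map Sub (bindsA s)) by (unfold bindings, bindsA; rewrite map_map; auto).
  rewrite Eb, parl_parlS.
  destruct (inst_nus (dom s) _ _ X (inst_parlS (SOpen s :: bindsA s) ltac:(discriminate))) as [f [Hinj [HI' Hp]]].
  eexists; repeat split; [exact HI'| |].
  - exists [enc (SRetry s)], (map (rn f) (map enc (SOpen s :: bindsA s))), []. rewrite !app_nil_r.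
    repeat split; auto. right. exists (rn_sync dbl s), (rn_sync f (rn_sync dbl s)).
    repeat split.
    + simpl. unfold enc. simpl. rewrite bindsA_rn, bindsA_rn. reflexivity.
    + rewrite !snd_rn. auto.
    + rewrite !dom_rn. intro H. apply NoDup_map_inj; auto.
    + intros n Hn Hc. rewrite !dom_rn in Hn. apply in_map_iff in Hn as [m [E Hm]]. subst.
      assert (Hm' : In m (names (map enc (SOpen s :: bindsA s)))).
      { unfold names. simpl. apply in_or_app. left. unfold enc. simpl. rewrite dom_rn. auto. }
      destruct (Hp m Hm') as [[A1 [A2 [A3 A4]]]|[A1 A2]].
      * auto.
      * apply A1. auto.
  - intros n Hn. right. rewrite names_map in Hn. apply in_map_iff in Hn as [m [E Hm]]. subst.
    assert (Hmd : In m (map dbl (dom s))).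
    { unfold enc in Hm. rewrite names_map in Hm. change (names (SOpen s :: bindsA s)) with (dom s ++ names (bindsA s)) in Hm.
      rewrite names_bindsA in Hm. apply in_map_iff in Hm as [m' [E Hm']]. subst.
      apply in_map. apply in_app_or in Hm' as [?|?]; auto. }
    destruct (Hp m Hm) as [[A1 [A2 [A3 A4]]]|[A1 A2]]; [auto|contradiction].
Qed.

Lemma fwd a a' : mstep a a' -> forall X La, Inst a La ->
  exists La', Inst a' La' /\ AStep X La La' /\ FreshRes X La La'.
Proof.
  induction 1; intros X La HI.
  - exact (fwd_raw _ _ X La (RR_I p q c) HI).
  - exact (fwd_raw _ _ X La (RR_IIi p s H) HI).
  - exact (fwd_raw _ _ X La (RR_IIii p s H) HI).
  - exact (fwd_raw _ _ X La (RR_IIIi s s' p q c) HI).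
  - exact (fwd_raw _ _ X La (RR_IIIii s p q c) HI).
  - exact (fwd_raw _ _ X La (RR_IIIiii s p q c) HI).
  - exact (fwd_raw _ _ X La (RR_IIIiv p q c) HI).
  - exact (fwd_raw _ _ X La (RR_IVi s p a H) HI).
  - apply fwd_retry; auto.
  - inversion HI as [|a0 b0 La1 Lb HLa HLb HD|]; subst.
    destruct (IHmstep (X ++ names Lb) La1 HLa) as [La1' [H1 [H2 H3]]].
    exists (La1' ++ Lb). repeat split.
    + constructor; auto. intros n Hn Ho Hc. destruct (H3 n Hn) as [Hn'|[_ Hn']].
      * exact (HD n Hn' Ho Hc).
      * apply Hn'. apply in_app_iff; auto.
    + apply AStep_app; auto.
    + intros n Hn. rewrite names_app in *. apply in_app_iff in Hn as [Hn|Hn].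
      * destruct (H3 n Hn) as [Hn'|[Ho Hn']]; [left; apply in_app_iff; auto|right; split; auto].
        intro; apply Hn'; apply in_app_iff; auto.
      * left; apply in_app_iff; auto.
  - inversion HI as [| |p0 a0 La1 k HLa HK]; subst.
    set (sg := swp (2*p) (2*k+1)).
    destruct (IHmstep (map sg X ++ [2*k+1]) La1 HLa) as [La1' [H1 [H2 H3]]].
    assert (HK' : ~ In (2*k+1) (names La1')).
    { intro Hc. destruct (H3 _ Hc) as [Hc'|[_ Hc']]; auto. apply Hc'. apply in_app_iff; simpl; auto. }
    exists (map (rn sg) La1'). repeat split.
    + constructor; auto.
    + apply (AStep_mono (map sg (map sg X ++ [2*k+1]))).
      * apply AStep_rn; auto. intros; eapply swp_inj; eauto.
      * intros x Hx. rewrite map_app. apply in_app_iff. left. rewrite map_map. apply in_map_iff.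
        exists x. split; auto. unfold sg. apply swp_invol.
    + intros n Hn. rewrite names_map in Hn. apply in_map_iff in Hn as [m [E Hm]]. subst n.
      destruct (H3 m Hm) as [Hm'|[Ho Hm']].
      * left. rewrite names_map. apply in_map; auto.
      * assert (m <> 2*k+1) by (intro; subst; apply Hm'; apply in_app_iff; simpl; auto).
        assert (m <> 2*p) by (intro; subst; rewrite odd_2k in Ho; discriminate).
        unfold sg. rewrite swp_o by auto. right. split; auto. intro Hx. apply Hm'.
        apply in_app_iff. left. apply in_map_iff. exists m. split; auto. apply swp_o; auto.
  - destruct (inst_scong _ _ H) as [S1 _]. destruct (S1 _ HI) as [L1 [HL1 P1]].
    destruct (IHmstep X L1 HL1) as [L2 [HL2 [HA HF]]].
    destruct (inst_scong _ _ H1) as [S3 _]. destruct (S3 _ HL2) as [L3 [HL3 P3]].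
    exists L3. repeat split; auto.
    + eapply AStep_perm; eauto. apply Permutation_sym; auto.
    + intros n Hn. apply (Permutation_in _ (Permutation_sym (Permutation_names _ _ P3))) in Hn.
      destruct (HF n Hn) as [Hn'|Hn']; auto. left.
      apply (Permutation_in _ (Permutation_sym (Permutation_names _ _ P1))); auto.
Qed.

Lemma remove_map_swp p q r l : remove Nat.eq_dec (swp p q r) (map (swp p q) l) = map (swp p q) (remove Nat.eq_dec r l).
Proof.
  induction l as [|x l IH]; simpl; auto.
  destruct (Nat.eq_dec (swp p q r) (swp p q x)) as [E|E]; destruct (Nat.eq_dec r x) as [E'|E']; subst.
  - auto.
  - apply swp_inj in E. contradiction.
  - contradiction.
  - simpl. rewrite IH. auto.
Qed.

Lemma fn_swap p q a : fn (swap p q a) = map (swp p q) (fn a).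
Proof.
  induction a; simpl.
  - rewrite IHa1, IHa2, map_app. auto.
  - rewrite IHa. apply remove_map_swp.
  - rewrite swap_sub_rn, sub_fn_rn. auto.
Qed.

Lemma fn_scong a b : scong a b -> forall n, In n (fn a) <-> In n (fn b).
Proof.
  induction 1; intro n; simpl.
  - tauto.
  - specialize (IHscong n); tauto.
  - specialize (IHscong1 n); specialize (IHscong2 n); tauto.
  - specialize (IHscong1 n); specialize (IHscong2 n); rewrite !in_app_iff; tauto.
  - split; intros Hn; apply in_remove in Hn as [H1 H2]; apply in_in_remove; auto; apply IHscong; auto.
  - rewrite !in_app_iff. tauto.
  - rewrite !in_app_iff. tauto.
  - rewrite in_app_iff. split.
    + intros [Hn|Hn]. apply in_remove in Hn as [H1 H2]. apply in_in_remove; auto. apply in_app_iff; auto.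
      apply in_in_remove; [intro; subst; contradiction|apply in_app_iff; auto].
    + intro Hn. apply in_remove in Hn as [H1 H2]. apply in_app_iff in H1 as [H1|H1]; auto.
      left. apply in_in_remove; auto.
  - split; intro Hn; repeat (apply in_remove in Hn as [Hn ?]); repeat apply in_in_remove; auto.
  - rewrite fn_swap. split; intro Hn.
    + apply in_remove in Hn as [H1 H2].
      assert (n <> q) by (intro; subst; apply H; apply in_in_remove; auto).
      apply in_in_remove; auto. apply in_map_iff. exists n. split; auto. apply swp_o; auto.
    + apply in_remove in Hn as [H1 H2]. apply in_map_iff in H1 as [m [E Hm]]. subst.
      unfold swp in *. destruct (Nat.eq_dec m p). subst; contradiction.
      destruct (Nat.eq_dec m q). subst. exfalso; apply H. apply in_in_remove; auto.
      apply in_in_remove; auto.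
Qed.

Lemma nus_app B1 B2 t : nus (B1 ++ B2) t = nus B1 (nus B2 t).
Proof. induction B1; simpl; auto. rewrite IHB1; auto. Qed.

Lemma scong_nus B t t' : scong t t' -> scong (nus B t) (nus B t').
Proof. induction B; simpl; auto. intro. apply sc_nu. auto. Qed.

Lemma fn_nus B t n : In n (fn (nus B t)) <-> In n (fn t) /\ ~ In n B.
Proof.
  induction B as [|b B IH]; simpl. tauto.
  split.
  - intro H. apply in_remove in H as [H1 H2]. apply IH in H1 as [H3 H4]. split; auto. intros [E|E]; auto.
  - intros [H1 H2]. apply in_in_remove; auto. apply IH. split; auto.
Qed.

Lemma par_nus_l B t u : (forall b, In b B -> ~ In b (fn u)) -> scong (Par (nus B t) u) (nus B (Par t u)).
Proof.
  induction B as [|b B IH]; intro H; simpl. apply sc_refl.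
  eapply sc_trans. apply sc_extr. apply H; simpl; auto.
  apply sc_nu. apply IH. intros; apply H; simpl; auto.
Qed.

Lemma fn_parlS M : M <> [] -> fn (parlS M) = names M.
Proof.
  induction M as [|x M IH]; intro H; [congruence|]. destruct M as [|y M].
  - simpl. unfold names; simpl. rewrite app_nil_r; auto.
  - change (parlS (x :: y :: M)) with (Par (Sub x) (parlS (y :: M))). change (fn (Par (Sub x) (parlS (y :: M)))) with (sub_fn x ++ fn (parlS (y :: M))). rewrite IH by discriminate. auto.
Qed.

Lemma parlS_app M1 M2 : M1 <> [] -> M2 <> [] -> scong (Par (parlS M1) (parlS M2)) (parlS (M1 ++ M2)).
Proof.
  induction M1 as [|x M1 IH]; intros H1 H2; [congruence|]. destruct M1 as [|y M1].
  - simpl. destruct M2; [congruence|]. apply sc_refl.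
  - change (parlS (x :: y :: M1)) with (Par (Sub x) (parlS (y :: M1))).
    change ((x :: y :: M1) ++ M2) with (x :: ((y :: M1) ++ M2)).
    replace (parlS (x :: (y :: M1) ++ M2)) with (Par (Sub x) (parlS ((y :: M1) ++ M2))) by reflexivity.
    eapply sc_trans. apply sc_assoc. apply sc_par. apply sc_refl. apply IH; auto. discriminate.
Qed.

Lemma swap_nus p q B t : (forall b, In b B -> b <> p /\ b <> q) -> swap p q (nus B t) = nus B (swap p q t).
Proof.
  induction B as [|b B IH]; intro H; simpl; auto. rewrite IH by (intros; apply H; simpl; auto).
  destruct (H b) as [H1 H2]; simpl; auto. rewrite swp_o; auto.
Qed.

Lemma swap_parlS p q M : swap p q (parlS M) = parlS (map (swap_sub p q) M).
Proof.
  induction M as [|x M IH]; simpl; auto. destruct M as [|y M]; simpl; auto.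
  simpl in IH. rewrite IH. auto.
Qed.

Definition phi (B : list nat) (g : nat -> nat) (n : nat) : nat :=
  if in_dec Nat.eq_dec n B then 2 * g n + 1 else 2 * n.

Definition injOn (f : nat -> nat) (l : list nat) : Prop :=
  forall x y, In x l -> In y l -> f x = f y -> x = y.

Definition NFrel (a : state) (L : list sub) (Y : list nat) (B : list nat) (g : nat -> nat) (M : list sub) : Prop :=
  NoDup B /\ (forall b, In b B -> ~ In b Y) /\ M <> [] /\
  scong a (nus B (parlS M)) /\ Permutation L (map (rn (phi B g)) M) /\
  injOn (phi B g) (names M) /\ incl (names M) (fn a ++ B).

Lemma fresh_nat (l : list nat) : exists k, ~ In k l.
Proof.
  exists (S (list_sum l)). intro H.
  assert (forall x, In x l -> x <= list_sum l).
  { clear. induction l; simpl; intros; [contradiction|]. destruct H; subst; try lia.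
    specialize (IHl x H). lia. }
  apply H0 in H. lia.
Qed.

Lemma perm_in_names L1 L2 n : Permutation L1 L2 -> In n (names L1) -> In n (names L2).
Proof. intros P H. apply (Permutation_in _ (Permutation_names _ _ P)); auto. Qed.

Lemma NF a L : Inst a L -> forall Y, exists B g M, NFrel a L Y B g M.
Proof.
  induction 1 as [x|a b La Lb HIa IHa HIb IHb HD|p a La k HIa IHa HK]; intro Y.
  - exists [], (fun n => n), [x]. unfold NFrel. repeat split; auto.
    + constructor.
    + discriminate.
    + apply sc_refl.
    + intros y z _ _. unfold phi. simpl. lia.
    + intros n Hn. unfold names in Hn. simpl in *. rewrite app_nil_r in *. auto.
  - unfold NFrel in *. destruct (IHb (Y ++ fn a)) as [Bb [gb [Mb [N1 [N2 [N3 [N4 [N5 [N6 N7]]]]]]]]].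
    destruct (IHa (Y ++ fn b ++ Bb)) as [Ba [ga [Ma [M1 [M2 [M3 [M4 [M5 [M6 M7]]]]]]]]].
    set (g := fun n => if in_dec Nat.eq_dec n Ba then ga n else gb n).
    assert (EA : forall n, In n (names Ma) -> phi (Ba ++ Bb) g n = phi Ba ga n).
    { intros n Hn. unfold phi, g. destruct (in_dec Nat.eq_dec n Ba).
      - destruct in_dec; auto. exfalso; apply n0; apply in_app_iff; auto.
      - destruct in_dec; auto. exfalso. apply in_app_iff in i as [i|i]; auto.
        apply M7 in Hn. apply in_app_iff in Hn as [Hn|Hn]; auto.
        apply (N2 n i). apply in_app_iff; auto. }
    assert (EB : forall n, In n (names Mb) -> phi (Ba ++ Bb) g n = phi Bb gb n).
    { intros n Hn. assert (~ In n Ba).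
      { intro Hc. apply (M2 n Hc). apply N7 in Hn. rewrite !in_app_iff in *. tauto. }
      unfold phi, g. destruct in_dec; destruct (in_dec Nat.eq_dec n Ba); try contradiction.
      - destruct in_dec; auto. apply in_app_iff in i as [i|i]; contradiction.
      - destruct in_dec; auto. exfalso; apply n0; apply in_app_iff; auto. }
    exists (Ba ++ Bb), g, (Ma ++ Mb). unfold NFrel. repeat split.
    + apply NoDup_app; auto. intros x Hx Hy. apply (M2 x Hx). apply in_app_iff; right; apply in_app_iff; auto.
    + intros x Hx. apply in_app_iff in Hx as [Hx|Hx]; [intro; apply (M2 x Hx); apply in_app_iff; auto|].
      intro; apply (N2 x Hx); apply in_app_iff; auto.
    + destruct Ma; [congruence|discriminate].
    + eapply sc_trans. apply sc_par; eauto.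
      eapply sc_trans. apply par_nus_l.
      { intros x Hx Hc. apply (fn_scong _ _ (sc_sym _ _ N4)) in Hc. apply (M2 x Hx). apply in_app_iff; right; apply in_app_iff; auto. }
      rewrite nus_app. apply scong_nus.
      eapply sc_trans. apply sc_comm. eapply sc_trans. apply par_nus_l.
      { intros x Hx Hc. rewrite fn_parlS in Hc by auto. apply M7 in Hc. apply in_app_iff in Hc as [Hc|Hc].
        apply (N2 x Hx). apply in_app_iff; auto. apply (M2 x Hc). rewrite !in_app_iff; auto. }
      apply scong_nus. eapply sc_trans. apply sc_comm. apply parlS_app; auto.
    + rewrite map_app. apply Permutation_app.
      * rewrite (map_rn_ext _ _ Ma EA); auto.
      * rewrite (map_rn_ext _ _ Mb EB); auto.
    + assert (Hcross : forall x y, In x (names Ma) -> In y (names Mb) -> phi (Ba ++ Bb) g x = phi (Ba ++ Bb) g y -> x = y).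
      { intros x y Hx Hy E. rewrite EA in E by auto. rewrite EB in E by auto.
        assert (P1 : In (phi Ba ga x) (names La)).
        { apply (perm_in_names _ _ _ (Permutation_sym M5)). rewrite names_map. apply in_map; auto. }
        assert (P2 : In (phi Bb gb y) (names Lb)).
        { apply (perm_in_names _ _ _ (Permutation_sym N5)). rewrite names_map. apply in_map; auto. }
        unfold phi in E, P1, P2. destruct in_dec; destruct in_dec; try lia.
        rewrite E in P1. exfalso. apply (HD _ P1); auto. apply odd_2k1. }
      intros x y Hx Hy E. rewrite names_app in Hx, Hy. apply in_app_iff in Hx, Hy.
      destruct Hx as [Hx|Hx]; destruct Hy as [Hy|Hy].
      * rewrite !EA in E by auto. auto.
      * auto.
      * symmetry. auto.
      * rewrite !EB in E by auto. auto.
    + intros n Hn. rewrite names_app in Hn. simpl. rewrite !in_app_iff. apply in_app_iff in Hn as [Hn|Hn].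
      apply M7 in Hn. rewrite in_app_iff in Hn. tauto. apply N7 in Hn. rewrite in_app_iff in Hn. tauto.
  - destruct (fresh_nat (Y ++ fn a ++ [p])) as [p' Hp']. rewrite !in_app_iff in Hp'. simpl in Hp'.
    destruct (IHa (Y ++ [p; p'])) as [Ba [ga [Ma [M1 [M2 [M3 [M4 [M5 [M6 M7]]]]]]]]].
    assert (Hpp : p <> p') by (intro; subst; tauto).
    assert (HpB : ~ In p Ba) by (intro Hc; apply (M2 p Hc); apply in_app_iff; simpl; auto).
    assert (Hp'B : ~ In p' Ba) by (intro Hc; apply (M2 p' Hc); apply in_app_iff; simpl; auto).
    set (g' := fun n => if Nat.eq_dec n p' then k else ga n).
    assert (Ekey : forall n, In n (names Ma) -> phi (p' :: Ba) g' (swp p p' n) = swp (2*p) (2*k+1) (phi Ba ga n)).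
    { intros n Hn. assert (Hin : In (phi Ba ga n) (names La)).
      { apply (perm_in_names _ _ _ (Permutation_sym M5)). rewrite names_map. apply in_map; auto. }
      destruct (in_dec Nat.eq_dec n Ba) as [HnB|HnB].
      - assert (n <> p) by (intro; subst; contradiction). assert (n <> p') by (intro; subst; contradiction).
        rewrite swp_o by auto. unfold phi in *. destruct (in_dec Nat.eq_dec n (p' :: Ba)) as [_|Hc]; [|exfalso; apply Hc; simpl; auto].
        destruct (in_dec Nat.eq_dec n Ba) as [_|]; [|contradiction].
        unfold g'. destruct Nat.eq_dec; [contradiction|].
        rewrite swp_o; [reflexivity|lia|intro E; rewrite <- E in HK; contradiction].
      - apply M7 in Hn. apply in_app_iff in Hn as [Hn|Hn]; [|contradiction].
        assert (n <> p') by (intro; subst; tauto).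
        destruct (Nat.eq_dec n p).
        + subst. rewrite swp_l. unfold phi. destruct in_dec as [_|Hc]; [|exfalso; apply Hc; simpl; auto].
          destruct (in_dec Nat.eq_dec p Ba); [contradiction|]. unfold g'. destruct Nat.eq_dec; [|congruence].
          rewrite swp_l. auto.
        + rewrite swp_o by auto. unfold phi. destruct in_dec as [Hc|_].
          { simpl in Hc. destruct Hc; [congruence|contradiction]. }
          destruct (in_dec Nat.eq_dec n Ba); [contradiction|]. rewrite swp_o; lia. }
    exists (p' :: Ba), g', (map (swap_sub p p') Ma). unfold NFrel. repeat split.
    + constructor; auto.
    + intros b Hb. simpl in Hb. destruct Hb as [Hb|Hb]. subst; tauto. intro; apply (M2 b Hb); apply in_app_iff; auto.
    + destruct Ma; [congruence|discriminate].
    + eapply sc_trans. apply sc_nu; eauto. simpl. rewrite <- swap_parlS, <- swap_nus.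
      * apply sc_alpha. intro Hc. apply (fn_scong _ _ (sc_nu p _ _ (sc_sym _ _ M4))) in Hc.
        simpl in Hc. apply in_remove in Hc as [Hc _]. tauto.
      * intros b Hb. split; intro; subst; contradiction.
    + eapply Permutation_trans. apply Permutation_map; eauto.
      rewrite map_rn_comp. replace (map (swap_sub p p') Ma) with (map (rn (swp p p')) Ma)
        by (apply map_ext; intros; rewrite swap_sub_rn; auto).
      rewrite map_rn_comp. rewrite (map_rn_ext _ _ Ma Ekey). auto.
    + replace (map (swap_sub p p') Ma) with (map (rn (swp p p')) Ma)
        by (apply map_ext; intros; rewrite swap_sub_rn; auto).
      intros x y Hx Hy E. rewrite names_map in Hx, Hy.
      apply in_map_iff in Hx as [x0 [Ex Hx]]. apply in_map_iff in Hy as [y0 [Ey Hy]]. subst.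
      rewrite !Ekey in E by auto. apply swp_inj in E. apply M6 in E; subst; auto.
    + replace (map (swap_sub p p') Ma) with (map (rn (swp p p')) Ma)
        by (apply map_ext; intros; rewrite swap_sub_rn; auto).
      intros x Hx. rewrite names_map in Hx. apply in_map_iff in Hx as [x0 [Ex Hx]]. subst.
      apply M7 in Hx. apply in_app_iff. apply in_app_iff in Hx as [Hx|Hx].
      * destruct (Nat.eq_dec x0 p). subst. rewrite swp_l. right; simpl; auto.
        assert (x0 <> p') by (intro; subst; tauto). rewrite swp_o by auto. left. simpl. apply in_in_remove; auto.
      * assert (x0 <> p) by (intro; subst; contradiction). assert (x0 <> p') by (intro; subst; contradiction).
        rewrite swp_o by auto. right. simpl; auto.
Qed.

Definition psi (B : list nat) (g : nat -> nat) (n : nat) : nat :=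
  if Nat.odd n then n else if in_dec Nat.eq_dec (Nat.div2 n) B then 2 * g (Nat.div2 n) + 1 else n.

Lemma even_div2 m : Nat.odd m = false -> m = 2 * Nat.div2 m.
Proof. intro H. rewrite (Nat.div2_odd m) at 1. rewrite H. simpl. lia. Qed.

Lemma div2_dbl n : Nat.div2 (2 * n) = n.
Proof. apply Nat.div2_double. Qed.

Lemma psi_dbl B g n : psi B g (2 * n) = phi B g n.
Proof. unfold psi, phi. rewrite odd_2k, div2_dbl. auto. Qed.

Lemma inst_nus_phi B t Lt g : NoDup B -> Inst t Lt ->
  (forall b, In b B -> In (2*b) (names Lt) -> ~ In (2 * g b + 1) (names Lt)) ->
  (forall b b', In b B -> In b' B -> In (2*b) (names Lt) -> In (2*b') (names Lt) -> g b = g b' -> b = b') ->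
  Inst (nus B t) (map (rn (psi B g)) Lt).
Proof.
  intros HN HI. induction HN as [|b B' Hb HN IH]; intros H1 H2.
  - simpl. rewrite map_rn_id; auto. intros n _. unfold psi. destruct Nat.odd; auto.
  - assert (IH' : Inst (nus B' t) (map (rn (psi B' g)) Lt)).
    { apply IH. intros; apply H1; simpl; auto. intros; apply H2; simpl; auto. }
    simpl.
    assert (Hgen : forall k, ~ In (2*k+1) (names (map (rn (psi B' g)) Lt)) ->
      (In (2*b) (names Lt) -> k = g b) ->
      Inst (Nu b (nus B' t)) (map (rn (psi (b :: B') g)) Lt)).
    { intros k Hk Hkb. apply (I_nu' b _ _ k _ IH' Hk). rewrite map_rn_comp. apply map_rn_ext.
      intros m Hm. unfold psi. destruct (Nat.odd m) eqn:Ho.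
      - rewrite swp_o; auto. intro; subst; rewrite odd_2k in Ho; discriminate.
        intro; subst. apply Hk. rewrite names_map. apply in_map_iff. exists (2*k+1). split; auto.
        unfold psi. rewrite odd_2k1. auto.
      - pose proof (even_div2 m Ho) as Em.
        destruct (in_dec Nat.eq_dec (Nat.div2 m) B') as [HB|HB]; destruct (in_dec Nat.eq_dec (Nat.div2 m) (b :: B')) as [HB2|HB2].
        + rewrite swp_o; auto. lia. intro E. apply Hk. rewrite names_map. apply in_map_iff. exists m. split; auto.
          unfold psi. rewrite Ho. destruct in_dec; [|contradiction]. auto.
        + exfalso; apply HB2; simpl; auto.
        + simpl in HB2. destruct HB2 as [HB2|HB2]; [|contradiction].
          rewrite <- HB2 in *. rewrite <- Em. rewrite swp_l. rewrite Hkb; auto. rewrite <- Em; auto.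
        + rewrite swp_o; auto. intro E. apply HB2. left. rewrite E, div2_dbl. auto.
          intro E. rewrite E in Ho. rewrite odd_2k1 in Ho. discriminate. }
    destruct (in_dec Nat.eq_dec (2*b) (names Lt)) as [Hin|Hin].
    + apply (Hgen (g b)); auto. intro Hc. rewrite names_map in Hc. apply in_map_iff in Hc as [m [E Hm]].
      unfold psi in E. destruct (Nat.odd m) eqn:Ho.
      * subst. apply (H1 b); simpl; auto.
      * pose proof (even_div2 m Ho) as Em. destruct in_dec.
        -- assert (Nat.div2 m = b).
           { apply (H2 (Nat.div2 m) b); auto. simpl; auto. simpl; auto. rewrite <- Em; auto. lia. }
           subst. contradiction.
        -- subst. rewrite odd_2k1 in Ho. discriminate.
    + destruct (fresh_odd (names (map (rn (psi B' g)) Lt))) as [k Hk]. apply (Hgen k); auto. contradiction.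
Qed.

Lemma parlS_perm M M' : Permutation M M' -> M <> [] -> scong (parlS M) (parlS M').
Proof.
  induction 1; intro Hne.
  - congruence.
  - destruct l as [|y l]. apply Permutation_nil in H. subst. apply sc_refl.
    destruct l' as [|y' l']. apply Permutation_sym, Permutation_nil in H. discriminate.
    change (scong (Par (Sub x) (parlS (y :: l))) (Par (Sub x) (parlS (y' :: l')))).
    apply sc_par. apply sc_refl. apply IHPermutation. discriminate.
  - destruct l as [|z l].
    + simpl. apply sc_comm.
    + change (scong (Par (Sub y) (Par (Sub x) (parlS (z :: l)))) (Par (Sub x) (Par (Sub y) (parlS (z :: l))))).
      eapply sc_trans. apply sc_sym, sc_assoc. eapply sc_trans. apply sc_par. apply sc_comm. apply sc_refl. apply sc_assoc.
  - eapply sc_trans. apply IHPermutation1; auto. apply IHPermutation2.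
    intro; subst. apply Permutation_sym, Permutation_nil in H. contradiction.
Qed.

Definition par2 (T : state) (Mr : list sub) : state :=
  match Mr with [] => T | _ => Par T (parlS Mr) end.

Lemma par2_parlS Ml Mr : Ml <> [] -> scong (parlS (Ml ++ Mr)) (par2 (parlS Ml) Mr).
Proof.
  intro H. destruct Mr as [|y Mr]. rewrite app_nil_r. apply sc_refl.
  change (par2 (parlS Ml) (y :: Mr)) with (Par (parlS Ml) (parlS (y :: Mr))). apply sc_sym. apply parlS_app; auto. discriminate.
Qed.

Lemma par2_step T T' Mr : mstep T T' -> mstep (par2 T Mr) (par2 T' Mr).
Proof. destruct Mr; simpl; auto. intro. apply r_par. auto. Qed.

Lemma inst_par2 T LT Mr : Inst T LT -> Inst (par2 T Mr) (LT ++ map enc Mr).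
Proof.
  intro H. destruct Mr as [|y Mr]. simpl. rewrite app_nil_r; auto.
  change (par2 T (y :: Mr)) with (Par T (parlS (y :: Mr))). constructor; auto. apply inst_parlS. discriminate.
  intros n _ Ho Hc. apply names_enc_even in Hc. congruence.
Qed.

Lemma mstep_nus B t t' : mstep t t' -> mstep (nus B t) (nus B t').
Proof. induction B; simpl; auto. intro. apply r_nu. auto. Qed.

Definition inv_on (h : nat -> nat) (l : list nat) (y : nat) : nat :=
  match find (fun x => Nat.eqb (h x) y) l with Some x => x | None => y end.

Lemma inv_on_spec h l x : injOn h l -> In x l -> inv_on h l (h x) = x.
Proof.
  intros Hi Hx. unfold inv_on. destruct (find (fun x0 => Nat.eqb (h x0) (h x)) l) eqn:E.
  - apply find_some in E as [E1 E2]. apply Nat.eqb_eq in E2. apply Hi; auto.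
  - eapply find_none in E; eauto. rewrite Nat.eqb_refl in E. discriminate.
Qed.

Lemma pullback a L lhs rest : Inst a L -> Permutation L (lhs ++ rest) ->
  exists B g M Ml Mr, NFrel a L [] B g M /\ Permutation M (Ml ++ Mr) /\
    map (rn (phi B g)) Ml = lhs /\ map (rn (phi B g)) Mr = rest.
Proof.
  intros HI HP. destruct (NF a L HI []) as [B [g [M HNF]]].
  destruct HNF as [N1 [N2 [N3 [N4 [N5 [N6 N7]]]]]].
  assert (P : Permutation (lhs ++ rest) (map (rn (phi B g)) M)).
  { eapply Permutation_trans. apply Permutation_sym; eauto. auto. }
  apply Permutation_map_inv in P as [M1 [E P]]. symmetry in E. apply map_eq_app in E as [Ml [Mr [E1 [E2 E3]]]].
  subst. exists B, g, M, Ml, Mr. repeat split; auto.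
Qed.

Lemma fire_raw a L lhs rhs rest : Inst a L -> Permutation L (lhs ++ rest) -> RawRule lhs rhs ->
  exists a' L', mstep a a' /\ Inst a' L' /\ Permutation L' (rhs ++ rest).
Proof.
  intros HI HP HR. destruct (pullback a L lhs rest HI HP) as [B [g [M [Ml [Mr [HNF [PM [El Er]]]]]]]].
  destruct HNF as [N1 [N2 [N3 [N4 [N5 [N6 N7]]]]]].
  set (h := phi B g) in *.
  assert (Hsub : incl (names (Ml ++ Mr)) (names M)).
  { intros n Hn. apply (perm_in_names _ _ _ (Permutation_sym PM)); auto. }
  set (h' := inv_on h (names M)).
  set (Mrhs := map (rn h') rhs).
  assert (Hl : map (rn h') lhs = Ml).
  { subst lhs. rewrite map_rn_comp. apply map_rn_id. intros n Hn. apply inv_on_spec; auto.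
    apply Hsub. rewrite names_app. apply in_or_app; auto. }
  assert (HR' : RawRule Ml Mrhs) by (rewrite <- Hl; apply rawrule_rn; auto).
  assert (Hr : map (rn h) Mrhs = rhs).
  { unfold Mrhs. rewrite map_rn_comp. apply map_rn_id. intros n Hn.
    apply (rawrule_names _ _ HR) in Hn. subst lhs. rewrite names_map in Hn.
    apply in_map_iff in Hn as [m [E Hm]]. subst. unfold h'. rewrite inv_on_spec; auto.
    apply Hsub. rewrite names_app. apply in_or_app; auto. }
  destruct (rawrule_ne _ _ HR') as [Nl Nr].
  exists (nus B (par2 (parlS Mrhs) Mr)), (map (rn (psi B g)) (map enc Mrhs ++ map enc Mr)). repeat split.
  - eapply r_struct; [|apply mstep_nus, par2_step, rawrule_step; eauto|apply sc_refl].
    eapply sc_trans; eauto. apply scong_nus. eapply sc_trans. apply parlS_perm; eauto.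
    apply par2_parlS; auto.
  - apply inst_nus_phi; auto.
    + apply inst_par2. apply inst_parlS; auto.
    + intros b _ _ Hc. rewrite <- map_app in Hc. apply names_enc_even in Hc. rewrite odd_2k1 in Hc. discriminate.
    + intros b b' Hb Hb' H1 H2 E. rewrite <- map_app in H1, H2. unfold enc in H1, H2. rewrite names_map in H1, H2.
      apply in_map_iff in H1 as [x [Ex Hx]]. apply in_map_iff in H2 as [y [Ey Hy]]. unfold dbl in *.
      assert (x = b) by lia. assert (y = b') by lia. subst x y.
      assert (Hin : forall z, In z (names (Mrhs ++ Mr)) -> In z (names M)).
      { intros z Hz. rewrite names_app in Hz. apply in_app_iff in Hz as [Hz|Hz]; apply Hsub; rewrite names_app; apply in_or_app; auto.
        left. apply (rawrule_names _ _ HR'); auto. }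
      apply N6; auto. unfold h, phi. destruct in_dec; [|contradiction]. destruct in_dec; [|contradiction]. lia.
  - rewrite <- (map_app enc). unfold enc. rewrite map_rn_comp. rewrite map_app.
    replace (map (rn (fun n => psi B g (dbl n))) Mrhs) with rhs.
    replace (map (rn (fun n => psi B g (dbl n))) Mr) with rest. auto.
    + subst rest. apply map_rn_ext. intros. unfold dbl. rewrite psi_dbl. auto.
    + rewrite <- Hr. apply map_rn_ext. intros. unfold dbl. rewrite psi_dbl. auto.
Qed.

Lemma fire_retry a L s rest : Inst a L -> Permutation L (SRetry s :: rest) ->
  exists a' L' s', mstep a a' /\ Inst a' L' /\ Permutation L' (SOpen s' :: bindsA s' ++ rest) /\
    map snd s' = map snd s /\ (NoDup (dom s) -> NoDup (dom s')) /\ (forall n, In n (dom s') -> ~ In n (names L)).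
Proof.
  intros HI HP. destruct (pullback a L [SRetry s] rest HI HP) as [B [g [M [Ml [Mr [HNF [PM [El Er]]]]]]]].
  destruct HNF as [N1 [N2 [N3 [N4 [N5 [N6 N7]]]]]].
  set (h := phi B g) in *.
  destruct Ml as [|x Ml]; [discriminate|]. destruct Ml; [|discriminate]. simpl in El. injection El as El.
  destruct x; simpl in El; try discriminate. injection El as El.
  set (T := parlS (SOpen s0 :: bindsA s0)).
  set (X := names L ++ map (fun b => 2 * g b + 1) B).
  destruct (inst_nus (dom s0) T _ X (inst_parlS (SOpen s0 :: bindsA s0) ltac:(discriminate))) as [f [Hinj [HIT Hp]]].
  assert (Hnm : names (map enc (SOpen s0 :: bindsA s0)) = map dbl (dom s0 ++ dom s0)).
  { unfold enc. rewrite names_map. change (names (SOpen s0 :: bindsA s0)) with (dom s0 ++ names (bindsA s0)).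
    rewrite names_bindsA. auto. }
  assert (HT : forall n, In n (names (map enc (SOpen s0 :: bindsA s0))) ->
     Nat.odd (f n) = true /\ ~ In (f n) X).
  { intros n Hn. destruct (Hp n Hn) as [[A1 [A2 [A3 A4]]]|[A1 A2]]; auto.
    exfalso. apply A1. rewrite Hnm in Hn. apply in_map_iff in Hn as [m [E Hm]]. subst.
    apply in_map. apply in_app_or in Hm as [?|?]; auto. }
  set (LT := map (rn f) (map enc (SOpen s0 :: bindsA s0))).
  assert (HLT : forall n, In n (names LT) -> Nat.odd n = true /\ ~ In n X).
  { intros n Hn. unfold LT in Hn. rewrite names_map in Hn. apply in_map_iff in Hn as [m [E Hm]]. subst. auto. }
  assert (Hsub : incl (names ([SRetry s0] ++ Mr)) (names M)).
  { intros n Hn. apply (perm_in_names _ _ _ (Permutation_sym PM)); auto. }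
  set (s' := rn_sync f (rn_sync dbl s0)).
  exists (nus B (par2 (nus (dom s0) (parl (Sub (SOpen s0)) (bindings s0))) Mr)),
         (map (rn (psi B g)) (LT ++ map enc Mr)), s'. repeat split.
  - eapply r_struct; [|apply mstep_nus, par2_step; apply r_IVii|apply sc_refl].
    eapply sc_trans; eauto. apply scong_nus. eapply sc_trans. apply parlS_perm; eauto. apply (par2_parlS [SRetry s0]). discriminate.
  - apply inst_nus_phi; auto.
    + apply inst_par2. 
      assert (Eb : bindings s0 = map Sub (bindsA s0)) by (unfold bindings, bindsA; rewrite map_map; auto).
      rewrite Eb, parl_parlS. auto.
    + intros b Hb H1 Hc. rewrite names_app in Hc, H1. apply in_app_iff in Hc as [Hc|Hc].
      * apply HLT in Hc as [_ Hc]. apply Hc. unfold X. apply in_app_iff. right. apply in_map_iff. exists b; auto.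
      * apply names_enc_even in Hc. rewrite odd_2k1 in Hc. discriminate.
    + intros b b' Hb Hb' H1 H2 E. rewrite names_app in H1, H2. apply in_app_iff in H1, H2.
      destruct H1 as [H1|H1]. apply HLT in H1 as [H1 _]. rewrite odd_2k in H1. discriminate.
      destruct H2 as [H2|H2]. apply HLT in H2 as [H2 _]. rewrite odd_2k in H2. discriminate.
      unfold enc in H1, H2. rewrite names_map in H1, H2.
      apply in_map_iff in H1 as [x [Ex Hx]]. apply in_map_iff in H2 as [y [Ey Hy]]. unfold dbl in *.
      assert (x = b) by lia. assert (y = b') by lia. subst.
      apply N6; try (apply Hsub; rewrite names_app; apply in_or_app; auto).
      unfold h, phi. destruct in_dec; [|contradiction]. destruct in_dec; [|contradiction]. lia.
  - rewrite map_app. rewrite (map_rn_id _ LT).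
    + replace (map (rn (psi B g)) (map enc Mr)) with rest.
      * unfold LT. simpl. unfold enc. simpl. rewrite !bindsA_rn. auto.
      * subst rest. unfold enc. rewrite map_rn_comp. apply map_rn_ext. intros. unfold dbl. rewrite psi_dbl. auto.
    + intros n Hn. apply HLT in Hn as [Ho _]. unfold psi. rewrite Ho. auto.
  - unfold s'. rewrite !snd_rn. subst s. rewrite snd_rn. auto.
  - unfold s'. rewrite !dom_rn. intro H. subst s. rewrite dom_rn in H. apply NoDup_map_inv in H.
    apply NoDup_map_inj; auto. apply NoDup_map_inj; auto. unfold dbl; intros; lia.
  - intros n Hn Hc. unfold s' in Hn. rewrite !dom_rn in Hn. apply in_map_iff in Hn as [m [E Hm]]. subst.
    apply in_map_iff in Hm as [d [E Hd]]. subst.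
    assert (Hin : In (dbl d) (names (map enc (SOpen s0 :: bindsA s0)))).
    { rewrite Hnm. apply in_map. apply in_or_app; auto. }
    apply HT in Hin as [_ Hin]. apply Hin. unfold X. apply in_or_app; auto.
Qed.

Definition ocdom (x : sub) : list nat := match x with SOpen s | SClosed s => dom s | _ => [] end.
Definition pn (x : sub) : list nat :=
  match x with SBind p _ | SCand p | SSelect _ p | SReject p | SDone _ p => [p] | _ => [] end.
Definition mn (x : sub) : list nat := match x with SMatch _ p q => [p; q] | _ => [] end.
Definition tn (x : sub) : list nat := match x with SCand p | SSelect _ p | SReject p => [p] | _ => [] end.

Definition OCin (s : sync) (L : list sub) : Prop := In (SOpen s) L \/ In (SClosed s) L.
Definition FoM (c : chan) (L : list sub) : Prop := In (SFree c) L \/ exists x y, In (SMatch c x y) L.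

Record Good (L : list sub) : Prop := {
  G1 : NoDup (flat_map ocdom L);
  G2 : NoDup (flat_map pn L);
  G3 : NoDup (flat_map mn L);
  G4 : forall x a, In (SBind x a) L -> exists s, OCin s L /\ In (x, a) s;
  G5 : forall c x y, In (SMatch c x y) L ->
         (exists s, OCin s L /\ In (x, AIn c) s) /\ (exists s, OCin s L /\ In (y, AOut c) s) /\
         In x (flat_map tn L) /\ In y (flat_map tn L);
  G6 : forall x, In x (flat_map tn L) -> exists c y, In (SMatch c x y) L \/ In (SMatch c y x) L;
  G7a : forall s x, In (SSelect s x) L -> In (SClosed s) L /\ In x (dom s);
  G7b : forall s x, In (SDone s x) L -> In (SClosed s) L /\ In x (dom s);
  G7c : forall s, In (SRetry s) L -> In (SClosed s) L;
  G8 : forall s x a, In (SOpen s) L -> In (x, a) s -> In (SBind x a) L \/ In (SCand x) L;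
  G9 : forall s x a, OCin s L -> In (x, a) s -> FoM (chan_of a) L
}.

Lemma flat_map_perm {A B} (f : A -> list B) L L' : Permutation L L' -> Permutation (flat_map f L) (flat_map f L').
Proof. induction 1; simpl; auto.
  - apply Permutation_app_head; auto.
  - rewrite !app_assoc. apply Permutation_app_tail. apply Permutation_app_comm.
  - eapply Permutation_trans; eauto.
Qed.

Lemma nodup_disj {A} (l1 l2 : list A) x : NoDup (l1 ++ l2) -> In x l1 -> ~ In x l2.
Proof.
  induction l1; simpl; intros H H1; [contradiction|]. apply NoDup_cons_iff in H as [Ha Hr].
  destruct H1; subst; auto. intro; apply Ha; apply in_or_app; auto.
Qed.

Lemma flat_map_unique {A} (f : A -> list nat) L y1 y2 x : NoDup (flat_map f L) -> In y1 L -> In y2 L ->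
  In x (f y1) -> In x (f y2) -> y1 = y2.
Proof.
  induction L as [|a L IH]; simpl; intros H H1 H2 H3 H4; [contradiction|].
  destruct H1 as [H1|H1]; destruct H2 as [H2|H2]; subst; auto.
  - exfalso. eapply nodup_disj; eauto. apply in_flat_map; eauto.
  - exfalso. eapply nodup_disj; eauto. apply in_flat_map; eauto.
  - apply IH; auto. apply NoDup_app_remove_l in H; auto.
Qed.

Lemma nodup_item {A} (f : A -> list nat) L y : NoDup (flat_map f L) -> In y L -> NoDup (f y).
Proof.
  induction L as [|a L IH]; simpl; intros H H1; [contradiction|].
  destruct H1; subst. apply NoDup_app_remove_r in H; auto. apply IH; auto. apply NoDup_app_remove_l in H; auto.
Qed.

Lemma tn_pn x L : In x (flat_map tn L) -> In x (flat_map pn L).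
Proof. intro H. apply in_flat_map in H as [y [Hy Hx]]. apply in_flat_map. exists y. split; auto. destruct y; simpl in *; auto. Qed.

Lemma mn_match x L : In x (flat_map mn L) -> exists c y, In (SMatch c x y) L \/ In (SMatch c y x) L.
Proof.
  intro H. apply in_flat_map in H as [z [Hz Hx]]. destruct z; simpl in Hx; try contradiction.
  destruct Hx as [E|[E|[]]]; subst; eauto.
Qed.

Lemma match_mn c x y L : In (SMatch c x y) L -> In x (flat_map mn L) /\ In y (flat_map mn L).
Proof. intro H. split; apply in_flat_map; exists (SMatch c x y); simpl; auto. Qed.

Lemma in_fm {A} (f : A -> list nat) L y x : In y L -> In x (f y) -> In x (flat_map f L).
Proof. intros. apply in_flat_map; eauto. Qed.

Lemma tn_cases x L : In x (flat_map tn L) -> In (SCand x) L \/ (exists s, In (SSelect s x) L) \/ In (SReject x) L.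
Proof.
  intro H. apply in_flat_map in H as [z [Hz Hx]]. destruct z; simpl in Hx; try contradiction;
  destruct Hx as [E|[]]; subst; eauto.
Qed.

Lemma Good_perm L L' : Good L -> Permutation L L' -> Good L'.
Proof.
  intros H P. assert (HI : forall x, In x L -> In x L') by (intros; eapply Permutation_in; eauto).
  assert (HI' : forall x, In x L' -> In x L) by (intros; eapply Permutation_in; [apply Permutation_sym|]; eauto).
  assert (HF : forall (f : sub -> list nat) x, In x (flat_map f L) -> In x (flat_map f L')).
  { intros f x Hx. eapply Permutation_in; [apply flat_map_perm|]; eauto. }
  assert (HF' : forall (f : sub -> list nat) x, In x (flat_map f L') -> In x (flat_map f L)).
  { intros f x Hx. eapply Permutation_in; [apply flat_map_perm, Permutation_sym|]; eauto. }
  assert (HO : forall s, OCin s L -> OCin s L') by (unfold OCin; intros s [?|?]; auto).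
  assert (HM : forall c, FoM c L -> FoM c L') by (unfold FoM; intros c [?|[x [y ?]]]; eauto).
  destruct H as [g1 g2 g3 g4 g5 g6 g7a g7b g7c g8 g9]; constructor.
  - eapply Permutation_NoDup; [apply flat_map_perm|]; eauto.
  - eapply Permutation_NoDup; [apply flat_map_perm|]; eauto.
  - eapply Permutation_NoDup; [apply flat_map_perm|]; eauto.
  - intros x a Hx. destruct (g4 x a (HI' _ Hx)) as [s [? ?]]; eauto.
  - intros c x y Hx. destruct (g5 c x y (HI' _ Hx)) as [[s1 [? ?]] [[s2 [? ?]] [? ?]]]. repeat split; eauto.
  - intros x Hx. destruct (g6 x (HF' _ _ Hx)) as [c [y [?|?]]]; eauto.
  - intros s x Hx. destruct (g7a s x (HI' _ Hx)); auto.
  - intros s x Hx. destruct (g7b s x (HI' _ Hx)); auto.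
  - intros s Hx. auto.
  - intros s x a Hx Ha. destruct (g8 s x a (HI' _ Hx) Ha); auto.
  - intros s x a Hx Ha. apply HM. apply (g9 s x a); auto. unfold OCin in *. destruct Hx; auto.
Qed.

Ltac memb_go H := match type of H with
  | _ \/ _ => let H' := fresh "E" in destruct H as [H'|H];
        [ first [discriminate H' | injection H'; intros; subst | idtac ] | memb_go H ]
  | _ => idtac end.
Ltac memb H := simpl in H; memb_go H.

Lemma in_rest {A} (x : A) rest l : In x rest -> In x (l ++ rest).
Proof. intro; apply in_or_app; auto. Qed.

Lemma fm_rest {A} (f : A -> list nat) x rest l : In x (flat_map f rest) -> In x (flat_map f (l ++ rest)).
Proof. intro. rewrite flat_map_app. apply in_or_app; auto. Qed.

Lemma good_I p q c rest : Good ([SBind p (AIn c); SBind q (AOut c); SFree c] ++ rest) ->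
  Good ([SCand p; SCand q; SMatch c p q] ++ rest).
Proof.
  intros [g1 g2 g3 g4 g5 g6 g7a g7b g7c g8 g9].
  assert (OCr : forall s, OCin s ([SBind p (AIn c); SBind q (AOut c); SFree c] ++ rest) -> OCin s ([SCand p; SCand q; SMatch c p q] ++ rest)).
  { unfold OCin. intros s [H|H]; memb H; simpl; auto 10. }
  assert (Hpq : p <> q). { simpl in g2. inversion g2; subst. intro; subst; simpl in *; tauto. }
  assert (Hp : ~ In p (flat_map pn rest)). { simpl in g2. inversion g2; subst. simpl in *; tauto. }
  assert (Hq : ~ In q (flat_map pn rest)). { simpl in g2. inversion g2; subst. inversion H2; auto. }
  assert (Hmn : forall z, In z (flat_map mn rest) -> In z (flat_map pn rest)).
  { intros z Hz. apply mn_match in Hz as [c' [y [Hz|Hz]]].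
    - destruct (g5 c' z y (in_rest _ _ _ Hz)) as [_ [_ [Ht _]]]. simpl in Ht. apply tn_pn; auto.
    - destruct (g5 c' y z (in_rest _ _ _ Hz)) as [_ [_ [_ Ht]]]. simpl in Ht. apply tn_pn; auto. }
  constructor.
  - simpl in *; auto.
  - simpl in *; auto.
  - simpl. constructor. simpl. intros [E|E]; [congruence|]. apply Hp, Hmn; auto.
    constructor. intro E. apply Hq, Hmn; auto. simpl in g3; auto.
  - intros x a Hx. memb Hx. destruct (g4 x a (in_rest _ _ _ Hx)) as [s [H1 H2]]. eauto.
  - intros c' x y Hx. memb Hx.
    + destruct (g4 x (AIn c') ltac:(simpl; auto)) as [s1 [H1 H2]].
      destruct (g4 y (AOut c') ltac:(simpl; auto)) as [s2 [H3 H4]].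
      repeat split; eauto; simpl; auto.
    + destruct (g5 c' x y (in_rest _ _ _ Hx)) as [[s1 [H1 H2]] [[s2 [H3 H4]] [H5 H6]]].
      repeat split; eauto; simpl in *; auto.
  - intros x Hx. simpl in Hx. destruct Hx as [E|[E|Hx]]; subst.
    + exists c, q. left. simpl; auto.
    + exists c, p. right. simpl; auto.
    + destruct (g6 x (fm_rest _ _ _ _ Hx)) as [c' [y [H|H]]]; memb H; exists c', y; [left|right]; apply in_rest; auto.
  - intros s x Hx. memb Hx. destruct (g7a s x (in_rest _ _ _ Hx)) as [H1 H2]. memb H1. split; auto. apply in_rest; auto.
  - intros s x Hx. memb Hx. destruct (g7b s x (in_rest _ _ _ Hx)) as [H1 H2]. memb H1. split; auto. apply in_rest; auto.
  - intros s Hx. memb Hx. specialize (g7c s (in_rest _ _ _ Hx)). memb g7c. apply in_rest; auto.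
  - intros s x a Hx Ha. memb Hx. destruct (g8 s x a (in_rest _ _ _ Hx) Ha) as [H|H]; memb H; simpl; auto 10.
  - intros s x a Hx Ha. assert (Hx' : OCin s ([SBind p (AIn c); SBind q (AOut c); SFree c] ++ rest)).
    { unfold OCin in *. destruct Hx as [H|H]; memb H; simpl; auto 10. }
    destruct (g9 s x a Hx' Ha) as [H|[x' [y' H]]]; unfold FoM.
    + memb H. right. exists p, q. simpl; auto. left. simpl; auto 10.
    + memb H. right. exists x', y'. simpl; auto 10.
Qed.

Lemma in_dom_pair (x : nat) (a : action) s : In (x, a) s -> In x (dom s).
Proof. intro. unfold dom. apply in_map_iff. exists (x,a); auto. Qed.

Lemma nodup_cons2 (p q : nat) l : NoDup (p :: q :: l) -> NoDup l /\ ~ In p l /\ ~ In q l /\ p <> q.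
Proof. intro H. inversion H; subst. inversion H3; subst. simpl in *. repeat split; auto. Qed.

Lemma good_IIi p s rest : In p (dom s) -> Good ([SCand p; SOpen s] ++ rest) -> Good ([SClosed s; SSelect s p] ++ rest).
Proof.
  intros Hd [g1 g2 g3 g4 g5 g6 g7a g7b g7c g8 g9].
  assert (OCr : forall s0, OCin s0 ([SCand p; SOpen s] ++ rest) -> OCin s0 ([SClosed s; SSelect s p] ++ rest)).
  { unfold OCin. intros s0 [H|H]; memb H; simpl; auto 10. }
  assert (OCr' : forall s0, OCin s0 ([SClosed s; SSelect s p] ++ rest) -> OCin s0 ([SCand p; SOpen s] ++ rest)).
  { unfold OCin. intros s0 [H|H]; memb H; simpl; auto 10. }
  constructor.
  - simpl in *; auto.
  - simpl in *; auto.
  - simpl in *; auto.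
  - intros x a Hx. memb Hx. destruct (g4 x a (in_rest _ _ _ Hx)) as [s0 [H1 H2]]. eauto.
  - intros c x y Hx. memb Hx. destruct (g5 c x y (in_rest _ _ _ Hx)) as [[s1 [H1 H2]] [[s2 [H3 H4]] [H5 H6]]].
    repeat split; eauto; simpl in *; auto.
  - intros x Hx. simpl in Hx. destruct (g6 x ltac:(simpl; auto)) as [c [y [H|H]]]; memb H; exists c, y; [left|right]; apply in_rest; auto.
  - intros s0 x Hx. memb Hx. split; simpl; auto. destruct (g7a s0 x (in_rest _ _ _ Hx)) as [H1 H2]. memb H1. split; auto. apply in_rest; auto.
  - intros s0 x Hx. memb Hx. destruct (g7b s0 x (in_rest _ _ _ Hx)) as [H1 H2]. memb H1. split; auto. apply in_rest; auto.
  - intros s0 Hx. memb Hx. specialize (g7c s0 (in_rest _ _ _ Hx)). memb g7c. apply in_rest; auto.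
  - intros s0 x a Hx Ha. memb Hx. destruct (g8 s0 x a (in_rest _ _ _ Hx) Ha) as [H|H]; memb H; simpl; auto 10.
    exfalso. simpl in g1. eapply nodup_disj; eauto. eapply in_fm; eauto. simpl. eapply in_dom_pair; eauto.
  - intros s0 x a Hx Ha. destruct (g9 s0 x a (OCr' _ Hx) Ha) as [H|[x' [y' H]]]; unfold FoM.
    + memb H. left. simpl; auto 10.
    + memb H. right. exists x', y'. simpl; auto 10.
Qed.

Lemma good_IIii p s rest : In p (dom s) -> Good ([SCand p; SClosed s] ++ rest) -> Good ([SClosed s; SReject p] ++ rest).
Proof.
  intros Hd [g1 g2 g3 g4 g5 g6 g7a g7b g7c g8 g9].
  assert (OCr : forall s0, OCin s0 ([SCand p; SClosed s] ++ rest) -> OCin s0 ([SClosed s; SReject p] ++ rest)).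
  { unfold OCin. intros s0 [H|H]; memb H; simpl; auto 10. }
  assert (OCr' : forall s0, OCin s0 ([SClosed s; SReject p] ++ rest) -> OCin s0 ([SCand p; SClosed s] ++ rest)).
  { unfold OCin. intros s0 [H|H]; memb H; simpl; auto 10. }
  constructor.
  - simpl in *; auto.
  - simpl in *; auto.
  - simpl in *; auto.
  - intros x a Hx. memb Hx. destruct (g4 x a (in_rest _ _ _ Hx)) as [s0 [H1 H2]]. eauto.
  - intros c x y Hx. memb Hx. destruct (g5 c x y (in_rest _ _ _ Hx)) as [[s1 [H1 H2]] [[s2 [H3 H4]] [H5 H6]]].
    repeat split; eauto; simpl in *; auto.
  - intros x Hx. simpl in Hx. destruct (g6 x ltac:(simpl; auto)) as [c [y [H|H]]]; memb H; exists c, y; [left|right]; apply in_rest; auto.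
  - intros s0 x Hx. memb Hx. destruct (g7a s0 x (in_rest _ _ _ Hx)) as [H1 H2]. memb H1; split; simpl; auto.
  - intros s0 x Hx. memb Hx. destruct (g7b s0 x (in_rest _ _ _ Hx)) as [H1 H2]. memb H1; split; simpl; auto.
  - intros s0 Hx. memb Hx. specialize (g7c s0 (in_rest _ _ _ Hx)). memb g7c; simpl; auto.
  - intros s0 x a Hx Ha. memb Hx. destruct (g8 s0 x a (in_rest _ _ _ Hx) Ha) as [H|H]; memb H; simpl; auto 10.
    exfalso. simpl in g1. eapply nodup_disj; eauto. eapply in_fm; eauto. simpl. eapply in_dom_pair; eauto.
  - intros s0 x a Hx Ha. destruct (g9 s0 x a (OCr' _ Hx) Ha) as [H|[x' [y' H]]]; unfold FoM.
    + memb H. left. simpl; auto 10.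
    + memb H. right. exists x', y'. simpl; auto 10.
Qed.

Lemma good_IIIi s s' p q c rest : Good ([SSelect s p; SSelect s' q; SMatch c p q] ++ rest) ->
  Good ([SDone s p; SDone s' q; SFree c] ++ rest).
Proof.
  intros [g1 g2 g3 g4 g5 g6 g7a g7b g7c g8 g9].
  assert (OCr : forall s0, OCin s0 ([SSelect s p; SSelect s' q; SMatch c p q] ++ rest) -> OCin s0 ([SDone s p; SDone s' q; SFree c] ++ rest)).
  { unfold OCin. intros s0 [H|H]; memb H; simpl; auto 10. }
  assert (OCr' : forall s0, OCin s0 ([SDone s p; SDone s' q; SFree c] ++ rest) -> OCin s0 rest).
  { unfold OCin. intros s0 [H|H]; memb H; simpl; auto 10. }
  simpl in g2, g3. apply nodup_cons2 in g3 as [g3 [Hp3 [Hq3 Hpq]]].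
  apply nodup_cons2 in g2 as [g2' [Hp2 [Hq2 _]]].
  assert (Hmn : forall z, In z (flat_map mn rest) -> z <> p /\ z <> q).
  { intros z Hz. split; intro; subst; auto. }
  constructor.
  - simpl in *; auto.
  - simpl; constructor; [simpl; intros [E|E]; [congruence|auto]|]. constructor; auto.
  - simpl in *; auto.
  - intros x a Hx. memb Hx. destruct (g4 x a (in_rest _ _ _ Hx)) as [s0 [H1 H2]]. eauto.
  - intros c' x y Hx. memb Hx. destruct (g5 c' x y (in_rest _ _ _ Hx)) as [[s1 [H1 H2]] [[s2 [H3 H4]] [H5 H6]]].
    destruct (match_mn _ _ _ _ Hx) as [Mx My]. destruct (Hmn _ Mx), (Hmn _ My).
    repeat split; eauto; simpl in *; intuition congruence.
  - intros x Hx. simpl in Hx. destruct (g6 x ltac:(simpl; auto)) as [c' [y [H|H]]]; memb H.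
    + exfalso. apply Hp2. apply tn_pn; auto.
    + exists c', y. left. apply in_rest; auto.
    + exfalso. apply Hq2. apply tn_pn; auto.
    + exists c', y. right. apply in_rest; auto.
  - intros s0 x Hx. memb Hx. destruct (g7a s0 x (in_rest _ _ _ Hx)) as [H1 H2]. memb H1; split; simpl; auto 10.
  - intros s0 x Hx. memb Hx.
    + destruct (g7a s0 x ltac:(simpl; auto)) as [H1 H2]. memb H1; split; simpl; auto 10.
    + destruct (g7a s0 x ltac:(simpl; auto)) as [H1 H2]. memb H1; split; simpl; auto 10.
    + destruct (g7b s0 x (in_rest _ _ _ Hx)) as [H1 H2]. memb H1; split; simpl; auto 10.
  - intros s0 Hx. memb Hx. specialize (g7c s0 (in_rest _ _ _ Hx)). memb g7c; simpl; auto 10.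
  - intros s0 x a Hx Ha. memb Hx. destruct (g8 s0 x a (in_rest _ _ _ Hx) Ha) as [H|H]; memb H; simpl; auto 10.
  - intros s0 x a Hx Ha. destruct (g9 s0 x a ltac:(apply OCr' in Hx; unfold OCin in *; simpl; tauto) Ha) as [H|[x' [y' H]]]; unfold FoM.
    + memb H. left. simpl; auto 10.
    + memb H. left; simpl; auto. right. exists x', y'. simpl; auto 10.
Qed.

Lemma good_IIIii s p q c rest : Good ([SSelect s p; SReject q; SMatch c p q] ++ rest) ->
  Good ([SRetry s; SFree c] ++ rest).
Proof.
  intros [g1 g2 g3 g4 g5 g6 g7a g7b g7c g8 g9].
  assert (OCr : forall s0, OCin s0 ([SSelect s p; SReject q; SMatch c p q] ++ rest) -> OCin s0 ([SRetry s; SFree c] ++ rest)).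
  { unfold OCin. intros s0 [H|H]; memb H; simpl; auto 10. }
  assert (OCr' : forall s0, OCin s0 ([SRetry s; SFree c] ++ rest) -> OCin s0 rest).
  { unfold OCin. intros s0 [H|H]; memb H; simpl; auto 10. }
  simpl in g2, g3. apply nodup_cons2 in g3 as [g3 [Hp3 [Hq3 Hpq]]].
  apply nodup_cons2 in g2 as [g2' [Hp2 [Hq2 _]]].
  assert (Hmn : forall z, In z (flat_map mn rest) -> z <> p /\ z <> q).
  { intros z Hz. split; intro; subst; auto. }
  constructor.
  - simpl in *; auto.
  - simpl; auto.
  - simpl in *; auto.
  - intros x a Hx. memb Hx. destruct (g4 x a (in_rest _ _ _ Hx)) as [s0 [H1 H2]]. eauto.
  - intros c' x y Hx. memb Hx. destruct (g5 c' x y (in_rest _ _ _ Hx)) as [[s1 [H1 H2]] [[s2 [H3 H4]] [H5 H6]]].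
    destruct (match_mn _ _ _ _ Hx) as [Mx My]. destruct (Hmn _ Mx), (Hmn _ My).
    repeat split; eauto; simpl in *; intuition congruence.
  - intros x Hx. simpl in Hx. destruct (g6 x ltac:(simpl; auto)) as [c' [y [H|H]]]; memb H.
    + exfalso. apply Hp2. apply tn_pn; auto.
    + exists c', y. left. apply in_rest; auto.
    + exfalso. apply Hq2. apply tn_pn; auto.
    + exists c', y. right. apply in_rest; auto.
  - intros s0 x Hx. memb Hx. destruct (g7a s0 x (in_rest _ _ _ Hx)) as [H1 H2]. memb H1; split; simpl; auto 10.
  - intros s0 x Hx. memb Hx. destruct (g7b s0 x (in_rest _ _ _ Hx)) as [H1 H2]. memb H1; split; simpl; auto 10.
  - intros s0 Hx. memb Hx.
    + destruct (g7a s0 p ltac:(simpl; auto)) as [H1 H2]. memb H1; simpl; auto 10.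
    + specialize (g7c s0 (in_rest _ _ _ Hx)). memb g7c; simpl; auto 10.
  - intros s0 x a Hx Ha. memb Hx. destruct (g8 s0 x a (in_rest _ _ _ Hx) Ha) as [H|H]; memb H; simpl; auto 10.
  - intros s0 x a Hx Ha. destruct (g9 s0 x a ltac:(apply OCr' in Hx; unfold OCin in *; simpl; tauto) Ha) as [H|[x' [y' H]]]; unfold FoM.
    + memb H. left. simpl; auto 10.
    + memb H. left; simpl; auto. right. exists x', y'. simpl; auto 10.
Qed.

Lemma good_IIIiii s p q c rest : Good ([SReject p; SSelect s q; SMatch c p q] ++ rest) ->
  Good ([SRetry s; SFree c] ++ rest).
Proof.
  intros [g1 g2 g3 g4 g5 g6 g7a g7b g7c g8 g9].
  assert (OCr : forall s0, OCin s0 ([SReject p; SSelect s q; SMatch c p q] ++ rest) -> OCin s0 ([SRetry s; SFree c] ++ rest)).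
  { unfold OCin. intros s0 [H|H]; memb H; simpl; auto 10. }
  assert (OCr' : forall s0, OCin s0 ([SRetry s; SFree c] ++ rest) -> OCin s0 rest).
  { unfold OCin. intros s0 [H|H]; memb H; simpl; auto 10. }
  simpl in g2, g3. apply nodup_cons2 in g3 as [g3 [Hp3 [Hq3 Hpq]]].
  apply nodup_cons2 in g2 as [g2' [Hp2 [Hq2 _]]].
  assert (Hmn : forall z, In z (flat_map mn rest) -> z <> p /\ z <> q).
  { intros z Hz. split; intro; subst; auto. }
  constructor.
  - simpl in *; auto.
  - simpl; auto.
  - simpl in *; auto.
  - intros x a Hx. memb Hx. destruct (g4 x a (in_rest _ _ _ Hx)) as [s0 [H1 H2]]. eauto.
  - intros c' x y Hx. memb Hx. destruct (g5 c' x y (in_rest _ _ _ Hx)) as [[s1 [H1 H2]] [[s2 [H3 H4]] [H5 H6]]].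
    destruct (match_mn _ _ _ _ Hx) as [Mx My]. destruct (Hmn _ Mx), (Hmn _ My).
    repeat split; eauto; simpl in *; intuition congruence.
  - intros x Hx. simpl in Hx. destruct (g6 x ltac:(simpl; auto)) as [c' [y [H|H]]]; memb H.
    + exfalso. apply Hp2. apply tn_pn; auto.
    + exists c', y. left. apply in_rest; auto.
    + exfalso. apply Hq2. apply tn_pn; auto.
    + exists c', y. right. apply in_rest; auto.
  - intros s0 x Hx. memb Hx. destruct (g7a s0 x (in_rest _ _ _ Hx)) as [H1 H2]. memb H1; split; simpl; auto 10.
  - intros s0 x Hx. memb Hx. destruct (g7b s0 x (in_rest _ _ _ Hx)) as [H1 H2]. memb H1; split; simpl; auto 10.
  - intros s0 Hx. memb Hx.
    + destruct (g7a s0 q ltac:(simpl; auto)) as [H1 H2]. memb H1; simpl; auto 10.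
    + specialize (g7c s0 (in_rest _ _ _ Hx)). memb g7c; simpl; auto 10.
  - intros s0 x a Hx Ha. memb Hx. destruct (g8 s0 x a (in_rest _ _ _ Hx) Ha) as [H|H]; memb H; simpl; auto 10.
  - intros s0 x a Hx Ha. destruct (g9 s0 x a ltac:(apply OCr' in Hx; unfold OCin in *; simpl; tauto) Ha) as [H|[x' [y' H]]]; unfold FoM.
    + memb H. left. simpl; auto 10.
    + memb H. left; simpl; auto. right. exists x', y'. simpl; auto 10.
Qed.

Lemma good_IIIiv p q c rest : Good ([SReject p; SReject q; SMatch c p q] ++ rest) ->
  Good ([SFree c] ++ rest).
Proof.
  intros [g1 g2 g3 g4 g5 g6 g7a g7b g7c g8 g9].
  assert (OCr : forall s0, OCin s0 ([SReject p; SReject q; SMatch c p q] ++ rest) -> OCin s0 ([SFree c] ++ rest)).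
  { unfold OCin. intros s0 [H|H]; memb H; simpl; auto 10. }
  assert (OCr' : forall s0, OCin s0 ([SFree c] ++ rest) -> OCin s0 rest).
  { unfold OCin. intros s0 [H|H]; memb H; simpl; auto 10. }
  simpl in g2, g3. apply nodup_cons2 in g3 as [g3 [Hp3 [Hq3 Hpq]]].
  apply nodup_cons2 in g2 as [g2' [Hp2 [Hq2 _]]].
  assert (Hmn : forall z, In z (flat_map mn rest) -> z <> p /\ z <> q).
  { intros z Hz. split; intro; subst; auto. }
  constructor.
  - simpl in *; auto.
  - simpl; auto.
  - simpl in *; auto.
  - intros x a Hx. memb Hx. destruct (g4 x a (in_rest _ _ _ Hx)) as [s0 [H1 H2]]. eauto.
  - intros c' x y Hx. memb Hx. destruct (g5 c' x y (in_rest _ _ _ Hx)) as [[s1 [H1 H2]] [[s2 [H3 H4]] [H5 H6]]].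
    destruct (match_mn _ _ _ _ Hx) as [Mx My]. destruct (Hmn _ Mx), (Hmn _ My).
    repeat split; eauto; simpl in *; intuition congruence.
  - intros x Hx. simpl in Hx. destruct (g6 x ltac:(simpl; auto)) as [c' [y [H|H]]]; memb H.
    + exfalso. apply Hp2. apply tn_pn; auto.
    + exists c', y. left. apply in_rest; auto.
    + exfalso. apply Hq2. apply tn_pn; auto.
    + exists c', y. right. apply in_rest; auto.
  - intros s0 x Hx. memb Hx. destruct (g7a s0 x (in_rest _ _ _ Hx)) as [H1 H2]. memb H1; split; simpl; auto 10.
  - intros s0 x Hx. memb Hx. destruct (g7b s0 x (in_rest _ _ _ Hx)) as [H1 H2]. memb H1; split; simpl; auto 10.
  - intros s0 Hx. memb Hx. specialize (g7c s0 (in_rest _ _ _ Hx)). memb g7c; simpl; auto 10.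
  - intros s0 x a Hx Ha. memb Hx. destruct (g8 s0 x a (in_rest _ _ _ Hx) Ha) as [H|H]; memb H; simpl; auto 10.
  - intros s0 x a Hx Ha. destruct (g9 s0 x a ltac:(apply OCr' in Hx; unfold OCin in *; simpl; tauto) Ha) as [H|[x' [y' H]]]; unfold FoM.
    + memb H. left. simpl; auto 10.
    + memb H. left; simpl; auto. right. exists x', y'. simpl; auto 10.
Qed.

Lemma good_IVi s p a rest : Good ([SDone s p] ++ rest) -> Good ([SAct a] ++ rest).
Proof.
  intros [g1 g2 g3 g4 g5 g6 g7a g7b g7c g8 g9].
  assert (OCr : forall s0, OCin s0 ([SDone s p] ++ rest) -> OCin s0 ([SAct a] ++ rest)).
  { unfold OCin. intros s0 [H|H]; memb H; simpl; auto 10. }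
  assert (OCr' : forall s0, OCin s0 ([SAct a] ++ rest) -> OCin s0 ([SDone s p] ++ rest)).
  { unfold OCin. intros s0 [H|H]; memb H; simpl; auto 10. }
  simpl in g2. apply NoDup_cons_iff in g2 as [_ g2].
  constructor.
  - simpl in *; auto.
  - simpl; auto.
  - simpl in *; auto.
  - intros x a' Hx. memb Hx. destruct (g4 x a' (in_rest _ _ _ Hx)) as [s0 [H1 H2]]. eauto.
  - intros c' x y Hx. memb Hx. destruct (g5 c' x y (in_rest _ _ _ Hx)) as [[s1 [H1 H2]] [[s2 [H3 H4]] [H5 H6]]].
    repeat split; eauto; simpl in *; intuition congruence.
  - intros x Hx. simpl in Hx. destruct (g6 x ltac:(simpl; auto)) as [c' [y [H|H]]]; memb H;
    exists c', y; [left|right]; apply in_rest; auto.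
  - intros s0 x Hx. memb Hx. destruct (g7a s0 x (in_rest _ _ _ Hx)) as [H1 H2]. memb H1; split; simpl; auto 10.
  - intros s0 x Hx. memb Hx. destruct (g7b s0 x (in_rest _ _ _ Hx)) as [H1 H2]. memb H1; split; simpl; auto 10.
  - intros s0 Hx. memb Hx. specialize (g7c s0 (in_rest _ _ _ Hx)). memb g7c; simpl; auto 10.
  - intros s0 x a' Hx Ha. memb Hx. destruct (g8 s0 x a' (in_rest _ _ _ Hx) Ha) as [H|H]; memb H; simpl; auto 10.
  - intros s0 x a' Hx Ha. destruct (g9 s0 x a' (OCr' _ Hx) Ha) as [H|[x' [y' H]]]; unfold FoM.
    + memb H. left. simpl; auto 10.
    + memb H. right. exists x', y'. simpl; auto 10.
Qed.

Lemma fm_bindsA_nil (f : sub -> list nat) s : (forall p a, f (SBind p a) = []) -> flat_map f (bindsA s) = [].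
Proof. intro H. induction s as [|[p a] s IH]; simpl; auto. rewrite H, IH. auto. Qed.

Lemma fm_bindsA_pn s : flat_map pn (bindsA s) = dom s.
Proof. induction s as [|[p a] s IH]; simpl; auto. rewrite IH. auto. Qed.

Lemma in_bindsA x s : In x (bindsA s) -> exists p a, x = SBind p a /\ In (p, a) s.
Proof. unfold bindsA. intro H. apply in_map_iff in H as [[p a] [E H]]. subst. eauto. Qed.

Lemma bindsA_in p a s : In (p, a) s -> In (SBind p a) (bindsA s).
Proof. intro H. unfold bindsA. apply in_map_iff. exists (p,a); auto. Qed.

Lemma fm_names (f : sub -> list nat) L n : (forall x, incl (f x) (sub_fn x)) -> In n (flat_map f L) -> In n (names L).
Proof. intros Hf H. apply in_flat_map in H as [x [Hx Hn]]. eapply in_names; eauto. apply Hf; auto. Qed.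

Lemma ocdom_fn x : incl (ocdom x) (sub_fn x).
Proof. destruct x; simpl; intros n H; auto; contradiction. Qed.
Lemma pn_fn x : incl (pn x) (sub_fn x).
Proof. destruct x; simpl; intros n H; auto; try contradiction; destruct H as [H|[]]; subst; simpl; auto. Qed.

Ltac memb2 H := simpl in H; destruct H as [H|H]; [try discriminate H; try (injection H; intros; subst)|
  apply in_app_iff in H; destruct H as [H|H]; [let p := fresh "p" in let a := fresh "a" in
    let E := fresh "E" in let Hpa := fresh "Hpa" in
    apply in_bindsA in H as [p [a [E Hpa]]]; try discriminate E; try (injection E; intros; subst) |]].

Lemma good_IVii s s' rest : map snd s' = map snd s -> (NoDup (dom s) -> NoDup (dom s')) ->
  (forall n, In n (dom s') -> ~ In n (names rest)) ->
  Good ([SRetry s] ++ rest) -> Good ((SOpen s' :: bindsA s') ++ rest).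
Proof.
  intros Hsnd Hnd Hfr [g1 g2 g3 g4 g5 g6 g7a g7b g7c g8 g9].
  assert (Hcl : In (SClosed s) rest) by (specialize (g7c s ltac:(simpl; auto)); memb g7c; auto).
  assert (Nds : NoDup (dom s')) by (apply Hnd; simpl in g1; apply (nodup_item ocdom rest (SClosed s)); auto).
  assert (OCr : forall s0, OCin s0 ([SRetry s] ++ rest) -> OCin s0 ((SOpen s' :: bindsA s') ++ rest)).
  { unfold OCin. intros s0 [H|H]; memb H; [left|right]; simpl; right; apply in_or_app; auto. }
  assert (Fr : forall c, FoM c ([SRetry s] ++ rest) -> FoM c ((SOpen s' :: bindsA s') ++ rest)).
  { unfold FoM. intros c [H|[x [y H]]]; memb H; [left|right; exists x, y]; simpl; right; apply in_or_app; auto. }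
  simpl in g1, g2, g3.
  constructor.
  - simpl. rewrite flat_map_app, fm_bindsA_nil by auto. simpl. apply NoDup_app; auto.
    intros n H1 H2. apply (Hfr n H1). eapply fm_names; eauto. apply ocdom_fn.
  - simpl. rewrite flat_map_app, fm_bindsA_pn. apply NoDup_app; auto.
    intros n H1 H2. apply (Hfr n H1). eapply fm_names; eauto. apply pn_fn.
  - simpl. rewrite flat_map_app, fm_bindsA_nil by auto. simpl. auto.
  - intros x a Hx. memb2 Hx.
    + exists s'. split; auto. left. simpl; auto.
    + destruct (g4 x a (in_rest _ _ _ Hx)) as [s0 [H1 H2]]. eauto.
  - intros c x y Hx. memb2 Hx. destruct (g5 c x y (in_rest _ _ _ Hx)) as [[s1 [H1 H2]] [[s2 [H3 H4]] [H5 H6]]].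
    simpl in H5, H6. repeat split; eauto; simpl; rewrite flat_map_app, fm_bindsA_nil by auto; auto.
  - intros x Hx. simpl in Hx. rewrite flat_map_app, fm_bindsA_nil in Hx by auto. simpl in Hx.
    destruct (g6 x ltac:(simpl; auto)) as [c' [y [H|H]]]; memb H; exists c', y; [left|right];
    simpl; right; apply in_or_app; auto.
  - intros s0 x Hx. memb2 Hx. destruct (g7a s0 x (in_rest _ _ _ Hx)) as [H1 H2]. memb H1. split; auto.
    simpl; right; apply in_or_app; auto.
  - intros s0 x Hx. memb2 Hx. destruct (g7b s0 x (in_rest _ _ _ Hx)) as [H1 H2]. memb H1. split; auto.
    simpl; right; apply in_or_app; auto.
  - intros s0 Hx. memb2 Hx. specialize (g7c s0 (in_rest _ _ _ Hx)). memb g7c. simpl; right; apply in_or_app; auto.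
  - intros s0 x a Hx Ha. memb2 Hx.
    + left. simpl. right. apply in_or_app. left. apply bindsA_in; auto.
    + destruct (g8 s0 x a (in_rest _ _ _ Hx) Ha) as [H|H]; memb H; [left|right]; simpl; right; apply in_or_app; auto.
  - intros s0 x a Hx Ha. destruct Hx as [Hx|Hx].
    + memb2 Hx.
      * assert (Hin : In a (map snd s)) by (rewrite <- Hsnd; apply in_map_iff; exists (x,a); auto).
        apply in_map_iff in Hin as [[x0 a0] [E Hin]]. simpl in E. subst a.
        apply Fr. apply (g9 s x0 a0); auto. right. simpl; auto.
      * apply Fr. apply (g9 s0 x a); auto. left. simpl; auto.
    + memb2 Hx. apply Fr. apply (g9 s0 x a); auto. right. simpl; auto.
Qed.

Lemma good_step L L' : Good L -> AStep [] L L' -> Good L'.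
Proof.
  intros HG [lhs [rhs [rest [HR [P1 P2]]]]].
  apply (Good_perm _ _ HG) in P1. eapply Good_perm; [|apply Permutation_sym; eauto].
  destruct HR as [HR|[s [s' [E1 [E2 [E3 [E4 E5]]]]]]].
  - destruct HR.
    + apply good_I; auto.
    + apply good_IIi; auto.
    + apply good_IIii; auto.
    + apply good_IIIi; auto.
    + eapply good_IIIii; eauto.
    + eapply good_IIIiii; eauto.
    + eapply good_IIIiv; eauto.
    + eapply good_IVi; eauto.
  - subst. apply (good_IVii s); auto.
Qed.

Definition lookupA (x : nat) (s : sync) : action :=
  match find (fun pa => Nat.eqb (fst pa) x) s with Some pa => snd pa | None => AIn 0 end.

Lemma nodup_fst (s : sync) x a a' : NoDup (dom s) -> In (x, a) s -> In (x, a') s -> a = a'.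
Proof.
  induction s as [|[y b] s IH]; simpl; intros Hn H1 H2; [contradiction|].
  inversion Hn; subst. destruct H1 as [E1|H1]; destruct H2 as [E2|H2].
  - congruence.
  - injection E1; intros; subst. exfalso; apply H3. eapply in_dom_pair; eauto.
  - injection E2; intros; subst. exfalso; apply H3. eapply in_dom_pair; eauto.
  - eauto.
Qed.

Lemma lookup_spec x a s : NoDup (dom s) -> In (x, a) s -> lookupA x s = a.
Proof.
  intros Hn H. unfold lookupA. destruct (find (fun pa => Nat.eqb (fst pa) x) s) as [[y b]|] eqn:E.
  - apply find_some in E as [E1 E2]. simpl in *. apply Nat.eqb_eq in E2. subst. simpl. eapply nodup_fst; eauto.
  - eapply find_none in E; eauto. simpl in E. rewrite Nat.eqb_refl in E. discriminate.
Qed.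

Definition abs_sub (x : sub) : program :=
  match x with
  | SOpen s | SSelect s _ | SRetry s => [CSel (map snd s)]
  | SDone s p => [CAct (lookupA p s)]
  | SAct a => [CAct a]
  | _ => []
  end.

Definition absL (L : list sub) : program := flat_map abs_sub L.

Lemma absL_app L1 L2 : absL (L1 ++ L2) = absL L1 ++ absL L2.
Proof. apply flat_map_app. Qed.

Lemma absL_perm L L' : Permutation L L' -> Permutation (absL L) (absL L').
Proof. apply flat_map_perm. Qed.

Lemma absL_bindsA s : absL (bindsA s) = [].
Proof. induction s as [|[p a] s IH]; simpl; auto. Qed.

Lemma preduce_perm P P' Q Q' : preduce P Q -> Permutation P P' -> Permutation Q Q' -> preduce P' Q'.
Proof.
  intros [al [be [c [r [H1 [H2 [H3 H4]]]]]]] P1 P2. exists al, be, c, r. repeat split; auto.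
  eapply Permutation_trans; [apply Permutation_sym|]; eauto.
  eapply Permutation_trans; [apply Permutation_sym|]; eauto.
Qed.

Lemma abs_step L L' : Good L -> AStep [] L L' -> Permutation (absL L) (absL L') \/ preduce (absL L) (absL L').
Proof.
  intros HG [lhs [rhs [rest [HR [P1 P2]]]]].
  apply (Good_perm _ _ HG) in P1 as HG'.
  assert (K : Permutation (absL (lhs ++ rest)) (absL (rhs ++ rest)) \/ preduce (absL (lhs ++ rest)) (absL (rhs ++ rest))).
  { destruct HR as [HR|[s [s' [E1 [E2 [E3 [E4 E5]]]]]]].
    - destruct HR; simpl; auto.
      + right. destruct HG' as [g1 g2 g3 g4 g5 g6 g7a g7b g7c g8 g9].
        destruct (g5 c p q ltac:(simpl; auto)) as [[s1 [H1 H2]] [[s2 [H3 H4]] _]].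
        destruct (g7a s p ltac:(simpl; auto)) as [C1 D1]. destruct (g7a s' q ltac:(simpl; auto)) as [C2 D2].
        assert (E1 : s = s1).
        { unfold OCin in H1. destruct H1 as [H1|H1];
          [assert (SClosed s = SOpen s1) | assert (SClosed s = SClosed s1)];
          try (eapply (flat_map_unique ocdom); eauto; simpl; eapply in_dom_pair; eauto); congruence. }
        assert (E2 : s' = s2).
        { unfold OCin in H3. destruct H3 as [H3|H3];
          [assert (SClosed s' = SOpen s2) | assert (SClosed s' = SClosed s2)];
          try (eapply (flat_map_unique ocdom); eauto; simpl; eapply in_dom_pair; eauto); congruence. }
        subst s1 s2.
        assert (N1 : NoDup (dom s)) by (apply (nodup_item ocdom _ _ g1 C1)).
        assert (N2 : NoDup (dom s')) by (apply (nodup_item ocdom _ _ g1 C2)).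
        exists (map snd s), (map snd s'), c, (absL rest). repeat split; auto.
        * apply in_map_iff. exists (p, AIn c); auto.
        * apply in_map_iff. exists (q, AOut c); auto.
        * rewrite (lookup_spec p (AIn c) s), (lookup_spec q (AOut c) s'); auto.
      + left. destruct HG' as [g1 g2 g3 g4 g5 g6 g7a g7b g7c g8 g9].
        destruct (g7b s p ltac:(simpl; auto)) as [C1 D1].
        rewrite (lookup_spec p a s); auto. apply (nodup_item ocdom _ _ g1 C1).
    - subst. left. simpl. rewrite absL_app, absL_bindsA. simpl. rewrite E3. auto. }
  destruct K as [K|K]; [left|right].
  - eapply Permutation_trans. apply absL_perm; eauto. eapply Permutation_trans; eauto. apply absL_perm, Permutation_sym; auto.
  - eapply preduce_perm; eauto. apply absL_perm, Permutation_sym; auto. apply absL_perm, Permutation_sym; auto.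
Qed.

Lemma fire a L lhs rhs rest : Inst a L -> Good L -> Permutation L (lhs ++ rest) -> RawRule lhs rhs ->
  exists a' L', mstep a a' /\ Inst a' L' /\ Good L' /\ Permutation L' (rhs ++ rest) /\ AStep [] L L'.
Proof.
  intros HI HG HP HR. destruct (fire_raw a L lhs rhs rest HI HP HR) as [a' [L' [H1 [H2 H3]]]].
  assert (HA : AStep [] L L'). { exists lhs, rhs, rest. repeat split; auto. left; auto. }
  assert (HG' : Good L') by (eapply good_step; eauto).
  exists a', L'. auto.
Qed.

Lemma fire_ret a L s rest : Inst a L -> Good L -> Permutation L (SRetry s :: rest) ->
  exists a' L' s', mstep a a' /\ Inst a' L' /\ Good L' /\ Permutation L' (SOpen s' :: bindsA s' ++ rest) /\
    AStep [] L L' /\ map snd s' = map snd s.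
Proof.
  intros HI HG HP. destruct (fire_retry a L s rest HI HP) as [a' [L' [s' [H1 [H2 [H3 [H4 [H5 H6]]]]]]]].
  assert (HA : AStep [] L L').
  { exists [SRetry s], (SOpen s' :: bindsA s'), rest. repeat split; auto. right.
    exists s, s'. repeat split; auto. intros n Hn Hc. apply (H6 n Hn). simpl in Hc.
    apply (perm_in_names _ _ _ (Permutation_sym HP)). simpl. unfold names. simpl. apply in_or_app. auto. }
  assert (HG' : Good L') by (eapply good_step; eauto).
  exists a', L', s'. repeat apply conj; auto.
Qed.

Lemma perm_extract {A} (x : A) L : In x L -> exists rest, Permutation L (x :: rest).
Proof. intro H. apply in_split in H as [l1 [l2 E]]. subst. exists (l1 ++ l2). apply Permutation_sym, Permutation_middle. Qed.

Definition R (P : program) (st : state) : Prop :=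
  exists L, Inst st L /\ Good L /\ Permutation P (absL L).

Lemma den_sub_rn f x : den_sub (rn f x) = den_sub x.
Proof. destruct x; reflexivity. Qed.

Lemma den_inst a L : Inst a L -> den_state a = flat_map den_sub L.
Proof.
  induction 1; simpl.
  - unfold enc. rewrite den_sub_rn. rewrite app_nil_r. auto.
  - rewrite flat_map_app. congruence.
  - rewrite IHInst. clear. induction La; simpl; auto. rewrite den_sub_rn, IHLa. auto.
Qed.

Lemma den_prog_app P Q : den_prog (P ++ Q) = den_prog P ++ den_prog Q.
Proof. apply flat_map_app. Qed.

Lemma den_prog_perm P Q : Permutation P Q -> Permutation (den_prog P) (den_prog Q).
Proof. apply flat_map_perm. Qed.

Lemma perm_filter {A} (f : A -> bool) l l' : Permutation l l' -> Permutation (filter f l) (filter f l').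
Proof.
  induction 1; simpl; auto.
  - destruct (f x); auto.
  - destruct (f x), (f y); auto. apply perm_swap.
  - eapply Permutation_trans; eauto.
Qed.

Definition isDone (x : sub) : bool := match x with SDone _ _ => true | _ => false end.

Lemma mstar_trans a b c : mstar a b -> mstar b c -> mstar a c.
Proof. induction 1; auto. intro. econstructor; eauto. Qed.

Lemma in_dom_ex x s : In x (dom s) -> exists a, In (x, a) s.
Proof. unfold dom. intro H. apply in_map_iff in H as [[y a] [E H]]. simpl in E. subst. eauto. Qed.

Lemma corr n : forall L a, length (filter isDone L) <= n -> Inst a L -> Good L ->
  exists a', mstar a a' /\ Permutation (den_prog (absL L)) (den_state a').
Proof.
  induction n as [|n IH]; intros L a Hn HI HG.
  all: destruct (find isDone L) as [y|] eqn:Ef.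
  1,3: apply find_some in Ef as [Hy Hd]; destruct y; try discriminate.
  - exfalso. apply perm_extract in Hy as [rest P]. apply (perm_filter isDone) in P.
    apply Permutation_length in P. simpl in P. lia.
  - destruct (G7b _ HG s p Hy) as [Hc Hd']. apply in_dom_ex in Hd' as [act Ha].
    apply perm_extract in Hy as [rest P].
    destruct (fire a L [SDone s p] [SAct act] rest HI HG P (RR_IVi s p act Ha)) as [a1 [L1 [S1 [I1 [G1' [P1 _]]]]]].
    assert (Hl : length (filter isDone L1) <= n).
    { apply (perm_filter isDone) in P, P1. apply Permutation_length in P, P1. simpl in P, P1. lia. }
    destruct (IH L1 a1 Hl I1 G1') as [a' [M1 D1]]. exists a'. split. econstructor; eauto.
    eapply Permutation_trans; [|apply D1]. apply den_prog_perm.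
    eapply Permutation_trans. apply absL_perm; eauto. eapply Permutation_trans; [|apply absL_perm, Permutation_sym; eauto].
    simpl. rewrite (lookup_spec p act s); auto. apply (nodup_item ocdom _ _ (G1 _ HG) Hc).
  - exists a. split. constructor. rewrite (den_inst _ _ HI). apply Permutation_refl'.
    clear - Ef. induction L as [|x L IH]; simpl in *; auto.
    destruct x; simpl in *; try discriminate; rewrite ?den_prog_app; rewrite IH; auto.
  - exists a. split. constructor. rewrite (den_inst _ _ HI). apply Permutation_refl'.
    clear - Ef. induction L as [|x L IH]; simpl in *; auto.
    destruct x; simpl in *; try discriminate; rewrite ?den_prog_app; rewrite IH; auto.
Qed.

Lemma safety P a L a' : Inst a L -> Good L -> Permutation P (absL L) -> mstep a a' ->
  exists P', pstar P P' /\ R P' a'.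
Proof.
  intros HI HG HP HS. destruct (fwd a a' HS [] L HI) as [L' [HI' [HA _]]].
  assert (HG' : Good L') by (eapply good_step; eauto).
  destruct (abs_step L L' HG HA) as [K|K].
  - exists P. split. constructor. exists L'. repeat apply conj; auto. eapply Permutation_trans; eauto.
  - exists (absL L'). split. econstructor; [|constructor]. eapply preduce_perm; eauto. apply Permutation_sym; auto.
    exists L'. repeat apply conj; auto.
Qed.

Definition isCand (x : sub) : bool := match x with SCand _ => true | _ => false end.
Definition isMatch (x : sub) : bool := match x with SMatch _ _ _ => true | _ => false end.
Definition isRetry (x : sub) : bool := match x with SRetry _ => true | _ => false end.
Definition cnt (f : sub -> bool) (L : list sub) : nat := length (filter f L).
Definition mu (L : list sub) : nat := 3 * cnt isMatch L + cnt isCand L + cnt isRetry L.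

Lemma cnt_perm f L L' : Permutation L L' -> cnt f L = cnt f L'.
Proof. intro P. unfold cnt. apply Permutation_length, perm_filter; auto. Qed.

Lemma cnt_app f l1 l2 : cnt f (l1 ++ l2) = cnt f l1 + cnt f l2.
Proof. unfold cnt. rewrite filter_app, length_app. auto. Qed.

Lemma mu_perm L L' : Permutation L L' -> mu L = mu L'.
Proof. intro P. unfold mu. rewrite !(cnt_perm _ _ _ P). auto. Qed.

Lemma mu_app l1 l2 : mu (l1 ++ l2) = mu l1 + mu l2.
Proof. unfold mu. rewrite !cnt_app. lia. Qed.

Lemma mu_bindsA s : mu (bindsA s) = 0.
Proof. induction s as [|[p a] s IH]; auto. Qed.

Lemma absfire L L' lhs rhs rest : Permutation L (lhs ++ rest) -> Permutation L' (rhs ++ rest) ->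
  absL lhs = absL rhs -> Permutation (absL L) (absL L').
Proof.
  intros P1 P2 E. eapply Permutation_trans. apply absL_perm; eauto. rewrite absL_app, E, <- absL_app.
  apply absL_perm, Permutation_sym; auto.
Qed.

Lemma carry (L L' lhs rhs rest : list sub) (z : sub) : Permutation L (lhs ++ rest) -> Permutation L' (rhs ++ rest) ->
  In z L -> ~ In z lhs -> In z L'.
Proof.
  intros P1 P2 H1 H2. apply (Permutation_in _ P1) in H1. apply in_app_or in H1 as [H1|H1]; [contradiction|].
  apply (Permutation_in _ (Permutation_sym P2)). apply in_or_app; auto.
Qed.

Lemma extract2 (x y : sub) L : In x L -> In y L -> x <> y -> exists rest, Permutation L ([x; y] ++ rest).
Proof.
  intros Hx Hy N. apply perm_extract in Hx as [u Pu]. assert (In y u).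
  { apply (Permutation_in _ Pu) in Hy. destruct Hy; auto. congruence. }
  apply perm_extract in H as [r Pr]. exists r. simpl. eapply Permutation_trans; eauto.
Qed.

Lemma extract3 (x y z : sub) L : In x L -> In y L -> In z L -> x <> y -> x <> z -> y <> z ->
  exists rest, Permutation L ([x; y; z] ++ rest).
Proof.
  intros Hx Hy Hz N1 N2 N3. apply perm_extract in Hx as [u Pu].
  assert (Hy' : In y u) by (apply (Permutation_in _ Pu) in Hy; destruct Hy; auto; congruence).
  assert (Hz' : In z u) by (apply (Permutation_in _ Pu) in Hz; destruct Hz; auto; congruence).
  destruct (extract2 y z u Hy' Hz' N3) as [r Pr]. exists r. simpl in *. eapply Permutation_trans; eauto.
Qed.

Lemma mplus_cons a b c : mstep a b -> mplus b c -> mplus a c.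
Proof. intros H [d [H1 H2]]. exists b. split; auto. econstructor; eauto. Qed.

Lemma abs_IIIi L L' s s' p q c rest : Good L ->
  Permutation L ([SSelect s p; SSelect s' q; SMatch c p q] ++ rest) ->
  Permutation L' ([SDone s p; SDone s' q; SFree c] ++ rest) -> preduce (absL L) (absL L').
Proof.
  intros HG P1 P2. apply (Good_perm _ _ HG) in P1 as HG'.
  destruct HG' as [g1 g2 g3 g4 g5 g6 g7a g7b g7c g8 g9].
  destruct (g5 c p q ltac:(simpl; auto)) as [[s1 [H1 H2]] [[s2 [H3 H4]] _]].
  destruct (g7a s p ltac:(simpl; auto)) as [C1 D1]. destruct (g7a s' q ltac:(simpl; auto)) as [C2 D2].
  assert (E1 : s = s1).
  { unfold OCin in H1. destruct H1 as [H1|H1];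
    [assert (SClosed s = SOpen s1) | assert (SClosed s = SClosed s1)];
    try (eapply (flat_map_unique ocdom); eauto; simpl; eapply in_dom_pair; eauto); congruence. }
  assert (E2 : s' = s2).
  { unfold OCin in H3. destruct H3 as [H3|H3];
    [assert (SClosed s' = SOpen s2) | assert (SClosed s' = SClosed s2)];
    try (eapply (flat_map_unique ocdom); eauto; simpl; eapply in_dom_pair; eauto); congruence. }
  subst s1 s2.
  assert (N1 : NoDup (dom s)) by (apply (nodup_item ocdom _ _ g1 C1)).
  assert (N2 : NoDup (dom s')) by (apply (nodup_item ocdom _ _ g1 C2)).
  exists (map snd s), (map snd s'), c, (absL rest). repeat split.
  - eapply Permutation_trans. apply absL_perm; eauto. simpl. auto.
  - apply in_map_iff. exists (p, AIn c); auto.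
  - apply in_map_iff. exists (q, AOut c); auto.
  - eapply Permutation_trans. apply absL_perm; eauto. simpl.
    rewrite (lookup_spec p (AIn c) s), (lookup_spec q (AOut c) s'); auto.
Qed.

Lemma two_opens L al be r : (forall s x, ~ In (SSelect s x) L) -> (forall s, ~ In (SRetry s) L) ->
  Permutation (absL L) (CSel al :: CSel be :: r) ->
  exists s1 s2 rest, Permutation L (SOpen s1 :: SOpen s2 :: rest) /\ al = map snd s1 /\ be = map snd s2.
Proof.
  intros HS HR HP.
  assert (Hone : forall L0 b r0, (forall s x, ~ In (SSelect s x) L0) -> (forall s, ~ In (SRetry s) L0) ->
            Permutation (absL L0) (CSel b :: r0) ->
            exists s1 L1, Permutation L0 (SOpen s1 :: L1) /\ b = map snd s1 /\ Permutation (absL L1) r0).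
  { intros L0 b r0 H1 H2 H3. assert (Hin : In (CSel b) (absL L0)) by (apply (Permutation_in _ (Permutation_sym H3)); simpl; auto).
    apply in_flat_map in Hin as [y [Hy Hb]]. destruct y; simpl in Hb; try (destruct Hb as [Hb|[]]; discriminate); try contradiction.
    - destruct Hb as [Hb|[]]. injection Hb as Hb. try subst b. try subst. apply perm_extract in Hy as [L1 PL]. exists s, L1. repeat split; auto.
      apply (Permutation_cons_inv (a := CSel (map snd s))). eapply Permutation_trans; [|apply H3].
      apply Permutation_sym. change (CSel (map snd s) :: absL L1) with (absL (SOpen s :: L1)). apply absL_perm; auto.
    - exfalso; eapply H1; eauto.
    - exfalso; eapply H2; eauto. }
  destruct (Hone L al (CSel be :: r) HS HR HP) as [s1 [L1 [P1 [E1 P1']]]].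
  assert (HS1 : forall s x, ~ In (SSelect s x) L1) by (intros s x H; apply (HS s x); apply (Permutation_in _ (Permutation_sym P1)); simpl; auto).
  assert (HR1 : forall s, ~ In (SRetry s) L1) by (intros s H; apply (HR s); apply (Permutation_in _ (Permutation_sym P1)); simpl; auto).
  destruct (Hone L1 be r HS1 HR1 P1') as [s2 [L2 [P2 [E2 _]]]].
  exists s1, s2, L2. repeat split; auto. eapply Permutation_trans; eauto.
Qed.

Ltac notin := simpl; let H := fresh in intro H; repeat (destruct H as [H|H]; [try discriminate H; try (injection H; intros; subst; congruence)|]); try contradiction.

Lemma quiescent a L P Q : Inst a L -> Good L -> (forall x, ~ In (SCand x) L) ->
  (forall c x y, ~ In (SMatch c x y) L) -> (forall s, ~ In (SRetry s) L) ->
  Permutation P (absL L) -> preduce P Q ->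
  exists a' P', mplus a a' /\ preduce P P' /\ R P' a'.
Proof.
  intros HI HG HC HM HR HP [al [be [c [r [Pp [Hal [Hbe Pq]]]]]]].
  assert (HS : forall s x, ~ In (SSelect s x) L).
  { intros s x H. destruct (G6 _ HG x (in_fm tn L _ x H ltac:(simpl; auto))) as [c' [y [H'|H']]]; eapply HM; eauto. }
  assert (PA : Permutation (absL L) (CSel al :: CSel be :: r)) by (eapply Permutation_trans; [apply Permutation_sym|]; eauto).
  destruct (two_opens L al be r HS HR PA) as [s1 [s2 [rest0 [PL [E1 E2]]]]]. subst al be.
  apply in_map_iff in Hal as [[x a1'] [Ex Hx]]. simpl in Ex. subst a1'.
  apply in_map_iff in Hbe as [[y b1'] [Ey Hy]]. simpl in Ey. subst b1'.
  assert (O1 : In (SOpen s1) L) by (apply (Permutation_in _ (Permutation_sym PL)); simpl; auto).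
  assert (O2 : In (SOpen s2) L) by (apply (Permutation_in _ (Permutation_sym PL)); simpl; auto).
  assert (g1' : NoDup (dom s1 ++ dom s2 ++ flat_map ocdom rest0)).
  { eapply Permutation_NoDup. apply (flat_map_perm ocdom _ _ PL). apply (G1 _ HG). }
  assert (Hxy : x <> y).
  { intro E; subst y. eapply nodup_disj; eauto. eapply in_dom_pair; eauto. apply in_or_app; left. eapply in_dom_pair; eauto. }
  assert (Hs : s1 <> s2).
  { intro E; subst s2. eapply nodup_disj; eauto. eapply in_dom_pair; eauto. apply in_or_app; left. eapply in_dom_pair; eauto. }
  assert (Bx : In (SBind x (AIn c)) L) by (destruct (G8 _ HG s1 x (AIn c) O1 Hx) as [?|?]; auto; exfalso; eapply HC; eauto).
  assert (By : In (SBind y (AOut c)) L) by (destruct (G8 _ HG s2 y (AOut c) O2 Hy) as [?|?]; auto; exfalso; eapply HC; eauto).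
  assert (Fc : In (SFree c) L).
  { destruct (G9 _ HG s1 x (AIn c) (or_introl O1) Hx) as [?|[x' [y' ?]]]; auto. exfalso; eapply HM; eauto. }
  destruct (extract3 _ _ _ L Bx By Fc ltac:(congruence) ltac:(discriminate) ltac:(discriminate)) as [rest1 P1].
  destruct (fire a L _ _ rest1 HI HG P1 (RR_I x y c)) as [a1 [L1 [S1 [I1 [G1' [P1' _]]]]]].
  assert (O1' : In (SOpen s1) L1) by (eapply (carry L L1); eauto; notin).
  assert (O2' : In (SOpen s2) L1) by (eapply (carry L L1); eauto; notin).
  assert (Cx : In (SCand x) L1) by (apply (Permutation_in _ (Permutation_sym P1')); simpl; auto).
  assert (Cy : In (SCand y) L1) by (apply (Permutation_in _ (Permutation_sym P1')); simpl; auto).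
  assert (Mxy : In (SMatch c x y) L1) by (apply (Permutation_in _ (Permutation_sym P1')); simpl; auto).
  destruct (extract2 _ _ L1 Cx O1' ltac:(discriminate)) as [rest2 P2].
  destruct (fire a1 L1 _ _ rest2 I1 G1' P2 (RR_IIi x s1 (in_dom_pair _ _ _ Hx))) as [a2 [L2 [S2 [I2 [G2' [P2' _]]]]]].
  assert (Cy2 : In (SCand y) L2) by (eapply (carry L1 L2); eauto; notin).
  assert (O22 : In (SOpen s2) L2) by (eapply (carry L1 L2); eauto; notin).
  assert (M2 : In (SMatch c x y) L2) by (eapply (carry L1 L2); eauto; notin).
  assert (Sx2 : In (SSelect s1 x) L2) by (apply (Permutation_in _ (Permutation_sym P2')); simpl; auto).
  destruct (extract2 _ _ L2 Cy2 O22 ltac:(discriminate)) as [rest3 P3].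
  destruct (fire a2 L2 _ _ rest3 I2 G2' P3 (RR_IIi y s2 (in_dom_pair _ _ _ Hy))) as [a3 [L3 [S3 [I3 [G3' [P3' _]]]]]].
  assert (Sx3 : In (SSelect s1 x) L3) by (eapply (carry L2 L3); eauto; notin).
  assert (M3 : In (SMatch c x y) L3) by (eapply (carry L2 L3); eauto; notin).
  assert (Sy3 : In (SSelect s2 y) L3) by (apply (Permutation_in _ (Permutation_sym P3')); simpl; auto).
  destruct (extract3 _ _ _ L3 Sx3 Sy3 M3 ltac:(congruence) ltac:(discriminate) ltac:(discriminate)) as [rest4 P4].
  destruct (fire a3 L3 _ _ rest4 I3 G3' P4 (RR_IIIi s1 s2 x y c)) as [a4 [L4 [S4 [I4 [G4' [P4' _]]]]]].
  assert (A1 : Permutation (absL L) (absL L3)).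
  { eapply Permutation_trans. eapply (absfire L L1); eauto.
    eapply Permutation_trans. eapply (absfire L1 L2); eauto. eapply (absfire L2 L3); eauto. }
  pose proof (abs_IIIi L3 L4 _ _ _ _ _ _ G3' P4 P4') as PR.
  exists a4, (absL L4). repeat apply conj.
  - exists a1. split; [exact S1|]. apply (mstar_step _ a2); [exact S2|]. apply (mstar_step _ a3); [exact S3|]. apply (mstar_step _ a4); [exact S4|]. constructor.
  - apply (preduce_perm _ _ _ _ PR). apply Permutation_sym; exact (Permutation_trans HP A1). apply Permutation_refl.
  - exists L4. repeat apply conj; auto.
Qed.

Lemma cont m L a P a1 L1 : (forall m', m' < m -> forall L a P, mu L = m' -> Inst a L -> Good L -> Permutation P (absL L) ->
     (exists Q, preduce P Q) -> exists a' P', mplus a a' /\ preduce P P' /\ R P' a') ->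
  mu L = m -> mu L1 < mu L -> mstep a a1 -> Inst a1 L1 -> Good L1 -> Permutation (absL L) (absL L1) ->
  Permutation P (absL L) -> (exists Q, preduce P Q) ->
  exists a' P', mplus a a' /\ preduce P P' /\ R P' a'.
Proof.
  intros IH Hm Hlt S1 I1 G1' PA HP HQ.
  destruct (IH (mu L1) ltac:(lia) L1 a1 P eq_refl I1 G1' (Permutation_trans HP PA) HQ) as [a' [P' [H1 [H2 H3]]]].
  exists a', P'. repeat split; auto. eapply mplus_cons; eauto.
Qed.

Lemma progress m : forall L a P, mu L = m -> Inst a L -> Good L -> Permutation P (absL L) ->
  (exists Q, preduce P Q) -> exists a' P', mplus a a' /\ preduce P P' /\ R P' a'.
Proof.
  induction m as [m IH] using lt_wf_ind. intros L a P Hm HI HG HP HQ.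
  destruct (find isCand L) as [y|] eqn:Ec.
  { apply find_some in Ec as [Hy Hc]. destruct y; try discriminate. rename p into x.
    destruct (G6 _ HG x (in_fm tn L _ x Hy ltac:(simpl; auto))) as [c [z [Hz|Hz]]].
    all: assert (Hown : exists s, OCin s L /\ In x (dom s)) by
      (destruct (G5 _ HG _ _ _ Hz) as [[s1 [? ?]] [[s2 [? ?]] _]]; eauto using in_dom_pair).
    all: destruct Hown as [s [[Ho|Ho] Hd]].
    all: first [ destruct (extract2 _ _ L Hy Ho ltac:(discriminate)) as [rest P1];
      first [ destruct (fire a L _ _ rest HI HG P1 (RR_IIi x s Hd)) as [a1 [L1 [S1 [I1 [G1' [P1' _]]]]]]
            | destruct (fire a L _ _ rest HI HG P1 (RR_IIii x s Hd)) as [a1 [L1 [S1 [I1 [G1' [P1' _]]]]]] ];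
      eapply (cont m L a P a1 L1); eauto;
      [ rewrite (mu_perm _ _ P1), (mu_perm _ _ P1'), !mu_app; simpl; lia
      | eapply (absfire L L1); eauto ] ]. }
  assert (HC : forall x, ~ In (SCand x) L).
  { intros x Hx. eapply find_none in Ec; eauto. discriminate. }
  destruct (find isMatch L) as [y|] eqn:Em.
  { apply find_some in Em as [Hy Hmt]. destruct y; try discriminate. rename p into x. rename p0 into y. rename c into c.
    destruct (G5 _ HG _ _ _ Hy) as [_ [_ [Tx Ty]]].
    assert (Hxy : x <> y).
    { pose proof (nodup_item mn _ _ (G3 _ HG) Hy) as N. simpl in N. inversion N; subst. simpl in *. intro; subst; tauto. }
    apply tn_cases in Tx as [Tx|[[s Tx]|Tx]]; [exfalso; eapply HC; eauto| |];
    apply tn_cases in Ty as [Ty|[[s' Ty]|Ty]]; try (exfalso; eapply HC; eauto; fail).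
    - destruct (extract3 _ _ _ L Tx Ty Hy ltac:(congruence) ltac:(discriminate) ltac:(discriminate)) as [rest P1].
      destruct (fire a L _ _ rest HI HG P1 (RR_IIIi s s' x y c)) as [a1 [L1 [S1 [I1 [G1' [P1' _]]]]]].
      pose proof (abs_IIIi L L1 _ _ _ _ _ _ HG P1 P1') as PR.
      exists a1, (absL L1). repeat apply conj.
      + exists a1. split; auto. constructor.
      + apply (preduce_perm _ _ _ _ PR). apply Permutation_sym; auto. apply Permutation_refl.
      + exists L1. repeat apply conj; auto.
    - destruct (extract3 _ _ _ L Tx Ty Hy ltac:(discriminate) ltac:(discriminate) ltac:(discriminate)) as [rest P1].
      destruct (fire a L _ _ rest HI HG P1 (RR_IIIii s x y c)) as [a1 [L1 [S1 [I1 [G1' [P1' _]]]]]].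
      eapply (cont m L a P a1 L1); eauto.
      + rewrite (mu_perm _ _ P1), (mu_perm _ _ P1'), !mu_app; simpl; lia.
      + eapply (absfire L L1); eauto.
    - destruct (extract3 _ _ _ L Tx Ty Hy ltac:(discriminate) ltac:(discriminate) ltac:(discriminate)) as [rest P1].
      destruct (fire a L _ _ rest HI HG P1 (RR_IIIiii s' x y c)) as [a1 [L1 [S1 [I1 [G1' [P1' _]]]]]].
      eapply (cont m L a P a1 L1); eauto.
      + rewrite (mu_perm _ _ P1), (mu_perm _ _ P1'), !mu_app; simpl; lia.
      + eapply (absfire L L1); eauto.
    - destruct (extract3 _ _ _ L Tx Ty Hy ltac:(congruence) ltac:(discriminate) ltac:(discriminate)) as [rest P1].
      destruct (fire a L _ _ rest HI HG P1 (RR_IIIiv x y c)) as [a1 [L1 [S1 [I1 [G1' [P1' _]]]]]].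
      eapply (cont m L a P a1 L1); eauto.
      + rewrite (mu_perm _ _ P1), (mu_perm _ _ P1'), !mu_app; simpl; lia.
      + eapply (absfire L L1); eauto. }
  assert (HM : forall c x y, ~ In (SMatch c x y) L).
  { intros c x y Hx. eapply find_none in Em; eauto. discriminate. }
  destruct (find isRetry L) as [y|] eqn:Er.
  { apply find_some in Er as [Hy Hrt]. destruct y; try discriminate.
    apply perm_extract in Hy as [rest P1].
    destruct (fire_ret a L s rest HI HG P1) as [a1 [L1 [s' [S1 [I1 [G1' [P1' [_ Hsnd]]]]]]]].
    eapply (cont m L a P a1 L1); eauto.
    + rewrite (mu_perm _ _ P1), (mu_perm _ _ P1'). change (SOpen s' :: bindsA s' ++ rest) with ([SOpen s'] ++ bindsA s' ++ rest).
      change (SRetry s :: rest) with ([SRetry s] ++ rest).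
      rewrite !mu_app, mu_bindsA. unfold mu at 1 3. unfold cnt. simpl. lia.
    + eapply Permutation_trans. apply absL_perm; eauto. eapply Permutation_trans; [|apply absL_perm, Permutation_sym; eauto].
      simpl. rewrite absL_app, absL_bindsA, Hsnd. auto. }
  assert (HR : forall s, ~ In (SRetry s) L).
  { intros s Hx. eapply find_none in Er; eauto. discriminate. }
  destruct HQ as [Q HQ]. eapply quiescent; eauto.
Qed.

Inductive ISeq : nat -> list state -> list sub -> nat -> Prop :=
| is_nil lo : ISeq lo [] [] lo
| is_cons lo mid hi x xs Lx Lxs : Inst x Lx ->
    (forall n, In n (names Lx) -> Nat.odd n = true -> lo <= n < mid) -> lo <= mid ->
    ISeq mid xs Lxs hi -> ISeq lo (x :: xs) (Lx ++ Lxs) hi.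

Lemma iseq_bound lo xs L hi : ISeq lo xs L hi -> forall n, In n (names L) -> Nat.odd n = true -> lo <= n.
Proof.
  induction 1; intros n Hn Ho; [contradiction|]. rewrite names_app in Hn. apply in_app_or in Hn as [Hn|Hn].
  apply H0 in Hn; auto; lia. apply IHISeq in Hn; auto; lia.
Qed.

Lemma iseq_inst lo x xs L hi : ISeq lo (x :: xs) L hi -> Inst (parl x xs) L.
Proof.
  revert lo x L. induction xs as [|y ys IH]; intros lo x L H;
    inversion H as [|lo' mid hi' x' xs' Lx Lxs HI HB Hle HS]; subst.
  - inversion HS; subst. rewrite app_nil_r. auto.
  - simpl. constructor; auto. eapply IH; eauto.
    intros n Hn Ho Hc. apply HB in Hn; auto. apply (iseq_bound _ _ _ _ HS) in Hc; auto. lia.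
Qed.

Lemma iseq_app lo mid hi xs ys L1 L2 : ISeq lo xs L1 mid -> ISeq mid ys L2 hi -> ISeq lo (xs ++ ys) (L1 ++ L2) hi.
Proof.
  induction 1; intro Hy; simpl; auto. rewrite <- app_assoc. econstructor; eauto.
Qed.

Definition fA (b : nat) := 2 * b + 1.

Definition selL (n : nat) (al : list action) : list sub :=
  let s := combine (map fA (seq n (length al))) al in SOpen s :: bindsA s.

Fixpoint hatL (n : nat) (P : program) : list sub :=
  match P with
  | [] => []
  | CAct a :: P' => SAct a :: hatL n P'
  | CSel al :: P' => selL n al ++ hatL (n + length al) P'
  end.

Fixpoint tot (P : program) : nat :=
  match P with [] => 0 | CAct _ :: P' => tot P' | CSel al :: P' => length al + tot P' end.

Lemma map_fst_combine {A B} (l : list A) (l' : list B) : length l = length l' -> map fst (combine l l') = l.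
Proof. revert l'; induction l; intros [|b l'] H; simpl in *; try discriminate; auto. rewrite IHl; auto. Qed.

Lemma map_snd_combine {A B} (l : list A) (l' : list B) : length l = length l' -> map snd (combine l l') = l'.
Proof. revert l'; induction l; intros [|b l'] H; simpl in *; try discriminate; auto. rewrite IHl; auto. Qed.

Lemma dom_sel n al : dom (combine (map fA (seq n (length al))) al) = map fA (seq n (length al)).
Proof. unfold dom. apply map_fst_combine. rewrite length_map, length_seq. auto. Qed.

Lemma rn_sync_combine h (l : list nat) (al : list action) : rn_sync h (combine l al) = combine (map h l) al.
Proof. revert al; induction l as [|b l IH]; intros [|a al]; simpl; auto. rewrite IH. auto. Qed.

Lemma inst_sel n al : Inst (hat_sel n al) (selL n al).
Proof.
  unfold hat_sel, selL. set (s := combine (seq n (length al)) al).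
  assert (Eb : bindings s = map Sub (bindsA s)) by (unfold bindings, bindsA; rewrite map_map; auto).
  rewrite Eb, parl_parlS.
  replace (SOpen (combine (map fA (seq n (length al))) al) :: bindsA (combine (map fA (seq n (length al))) al))
    with (map (rn (psi (seq n (length al)) (fun b => b))) (map enc (SOpen s :: bindsA s))).
  - apply inst_nus_phi.
    + apply seq_NoDup.
    + apply inst_parlS. discriminate.
    + intros b _ _ Hc. apply names_enc_even in Hc. rewrite odd_2k1 in Hc. discriminate.
    + auto.
  - unfold enc. rewrite map_rn_comp. simpl. rewrite bindsA_rn. unfold s. rewrite rn_sync_combine.
    replace (map (fun n0 => psi (seq n (length al)) (fun b => b) (dbl n0)) (seq n (length al)))
      with (map fA (seq n (length al))); auto.
    apply map_ext_in. intros b Hb. unfold dbl. rewrite psi_dbl. unfold phi. destruct in_dec; [auto|contradiction].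
Qed.

Lemma names_selL n al : forall x, In x (names (selL n al)) -> In x (map fA (seq n (length al))).
Proof.
  intros x Hx. unfold selL in Hx. change (names (SOpen ?s :: bindsA ?s)) with (dom s ++ names (bindsA s)) in Hx.
  rewrite names_bindsA, dom_sel in Hx. apply in_app_or in Hx as [?|?]; auto.
Qed.

Lemma iseq_hat P : forall n, ISeq (2*n) (hat_comps n P) (hatL n P) (2*(n + tot P)).
Proof.
  induction P as [|S P IH]; intro n; cbn [hat_comps hatL tot].
  - rewrite Nat.add_0_r. constructor.
  - destruct S as [a|al].
    + change (SAct a :: hatL n P) with ([SAct a] ++ hatL n P). econstructor; [constructor| |auto|apply IH].
      intros m Hm. unfold names in Hm. simpl in Hm. contradiction.
    + apply (is_cons (2*n) (2*(n + length al))); [apply inst_sel| | |].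
      * intros m Hm Ho. apply names_selL in Hm. apply in_map_iff in Hm as [b [E Hb]]. apply in_seq in Hb.
        unfold fA in E. lia.
      * lia.
      * replace (2 * (n + (length al + tot P))) with (2 * (n + length al + tot P)) by lia. apply IH.
Qed.

Lemma iseq_free C : ISeq 0 (map (fun c => Sub (SFree c)) C) (map SFree C) 0.
Proof.
  induction C as [|c C IH]; simpl. constructor.
  change (SFree c :: map SFree C) with ([SFree c] ++ map SFree C). econstructor; eauto. constructor.
  intros m Hm. unfold names in Hm. simpl in Hm. contradiction.
Qed.

Lemma hat_ne P n : P <> [] -> hat_comps n P <> [].
Proof. destruct P as [|[a|al] P]; simpl; congruence. Qed.

Lemma inst_compile C P : P <> [] -> Inst (compile C P) (map SFree C ++ hatL 0 P).
Proof.
  intro HP. unfold compile.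
  pose proof (iseq_app _ _ _ _ _ _ _ (iseq_free C) (iseq_hat P 0)) as HS.
  destruct (map (fun c => Sub (SFree c)) C ++ hat_comps 0 P) as [|x xs] eqn:E.
  - exfalso. apply (hat_ne P 0 HP). destruct (hat_comps 0 P); auto. destruct (map _ C); discriminate.
  - eapply iseq_inst; eauto.
Qed.

Lemma fm_free (f : sub -> list nat) C : (forall c, f (SFree c) = []) -> flat_map f (map SFree C) = [].
Proof. intro H. induction C; simpl; auto. rewrite H, IHC. auto. Qed.

Lemma hl_fm (f : sub -> list nat) (Hf : forall a, f (SAct a) = []) (Hbd : forall p a, f (SBind p a) = [])
  (Ho : forall s, f (SOpen s) = dom s) P : forall n, flat_map f (hatL n P) = map fA (seq n (tot P)).
Proof.
  induction P as [|[a|al] P IH]; intro n; simpl; auto.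
  - rewrite Hf. simpl. auto.
  - rewrite flat_map_app, IH. unfold selL. simpl. rewrite Ho, fm_bindsA_nil by auto. rewrite dom_sel.
    rewrite seq_app, map_app. rewrite ?app_nil_r. auto.
Qed.

Lemma hl_fm_pn P : forall n, flat_map pn (hatL n P) = map fA (seq n (tot P)).
Proof.
  induction P as [|[a|al] P IH]; intro n; simpl; auto.
  rewrite flat_map_app, IH. unfold selL. simpl. rewrite fm_bindsA_pn. rewrite dom_sel.
  rewrite seq_app, map_app. auto.
Qed.

Lemma hl_fm_nil (f : sub -> list nat) (Hf : forall a, f (SAct a) = []) (Hbd : forall p a, f (SBind p a) = [])
  (Ho : forall s, f (SOpen s) = []) P : forall n, flat_map f (hatL n P) = [].
Proof.
  induction P as [|[a|al] P IH]; intro n; simpl; auto.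
  - rewrite Hf. simpl. auto.
  - rewrite flat_map_app, IH. unfold selL. simpl. rewrite Ho, fm_bindsA_nil by auto. auto.
Qed.

Lemma hl_items P : forall n y, In y (hatL n P) ->
  (exists a, y = SAct a) \/
  (exists s al, y = SOpen s /\ In (CSel al) P /\ map snd s = al /\ (forall x a, In (x, a) s -> In (SBind x a) (hatL n P))) \/
  (exists x a s, y = SBind x a /\ In (SOpen s) (hatL n P) /\ In (x, a) s).
Proof.
  induction P as [|[a|al] P IH]; intros n y Hy; cbn [hatL] in Hy; [contradiction| |].
  - destruct Hy as [Hy|Hy]; [left; eauto|].
    destruct (IH n y Hy) as [H|[[s [al [E1 [E2 [E3 E4]]]]]|[x [a' [s [E1 [E2 E3]]]]]]]; auto.
    + right; left. exists s, al. repeat split; simpl; auto.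
    + right; right. exists x, a', s. repeat split; simpl; auto.
  - apply in_app_or in Hy as [Hy|Hy].
    + unfold selL in Hy. simpl in Hy. destruct Hy as [Hy|Hy].
      * right; left. subst. eexists; exists al. repeat split; simpl; auto.
        -- apply map_snd_combine. rewrite length_map, length_seq. auto.
        -- intros x a' Ha. right. apply in_or_app. left. apply bindsA_in; auto.
      * apply in_bindsA in Hy as [x [a' [E Ha]]]. right; right. exists x, a', (combine (map fA (seq n (length al))) al).
        repeat split; auto. apply in_or_app; left. unfold selL; simpl; auto.
    + destruct (IH _ y Hy) as [H|[[s [al' [E1 [E2 [E3 E4]]]]]|[x [a' [s [E1 [E2 E3]]]]]]]; auto.
      * right; left. exists s, al'. split; [auto|split; [right; auto|split; [auto|]]].
        intros x a Ha. cbn [hatL]. apply in_or_app; right; auto.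
      * right; right. exists x, a', s. split; auto. split; auto. cbn [hatL]. apply in_or_app; right; auto.
Qed.

Lemma absL_hat P : forall n, absL (hatL n P) = P.
Proof.
  induction P as [|[a|al] P IH]; intro n; simpl; auto.
  - rewrite IH. auto.
  - rewrite absL_app, IH. unfold selL. simpl. rewrite absL_bindsA.
    rewrite map_snd_combine; auto. rewrite length_map, length_seq. auto.
Qed.

Lemma absL_free C : absL (map SFree C) = [].
Proof. induction C; simpl; auto. Qed.

Lemma fA_inj : forall x y, fA x = fA y -> x = y.
Proof. unfold fA. intros. lia. Qed.

Lemma good_init C P : (forall c, In c C <-> occurs c P) -> Good (map SFree C ++ hatL 0 P).
Proof.
  intro HC.
  assert (Hit : forall y, In y (map SFree C ++ hatL 0 P) -> (exists c, y = SFree c) \/ In y (hatL 0 P)).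
  { intros y Hy. apply in_app_or in Hy as [Hy|Hy]; auto. apply in_map_iff in Hy as [c [E _]]. eauto. }
  assert (Hno : forall y, In y (map SFree C ++ hatL 0 P) ->
     (exists c, y = SFree c) \/ (exists a, y = SAct a) \/ (exists s, y = SOpen s) \/ (exists x a, y = SBind x a)).
  { intros y Hy. destruct (Hit y Hy) as [?|Hy']; auto.
    destruct (hl_items P 0 y Hy') as [?|[[s [al [E _]]]|[x [a [s [E _]]]]]]; eauto 10. }
  constructor.
  - rewrite flat_map_app, fm_free by auto. rewrite hl_fm; auto. apply NoDup_map_inj. apply fA_inj. apply seq_NoDup.
  - rewrite flat_map_app, fm_free by auto. rewrite hl_fm_pn. apply NoDup_map_inj. apply fA_inj. apply seq_NoDup.
  - rewrite flat_map_app, fm_free, hl_fm_nil by auto. constructor.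
  - intros x a Hx. destruct (Hit _ Hx) as [[c E]|Hx']; [discriminate|].
    destruct (hl_items P 0 _ Hx') as [[? E]|[[s [al [E _]]]|[x' [a' [s [E [E2 E3]]]]]]]; try discriminate.
    injection E; intros; subst. exists s. split; auto. left. apply in_or_app; auto.
  - intros c x y Hx. exfalso. destruct (Hno _ Hx) as [[? E]|[[? E]|[[? E]|[? [? E]]]]]; discriminate.
  - intros x Hx. exfalso. rewrite flat_map_app, fm_free, hl_fm_nil in Hx by auto. contradiction.
  - intros s x Hx. exfalso. destruct (Hno _ Hx) as [[? E]|[[? E]|[[? E]|[? [? E]]]]]; discriminate.
  - intros s x Hx. exfalso. destruct (Hno _ Hx) as [[? E]|[[? E]|[[? E]|[? [? E]]]]]; discriminate.
  - intros s Hx. exfalso. destruct (Hno _ Hx) as [[? E]|[[? E]|[[? E]|[? [? E]]]]]; discriminate.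
  - intros s x a Hx Ha. destruct (Hit _ Hx) as [[c E]|Hx']; [discriminate|].
    destruct (hl_items P 0 _ Hx') as [[? E]|[[s' [al [E [_ [_ E4]]]]]|[x' [a' [s' [E _]]]]]]; try discriminate.
    injection E; intros; subst. left. apply in_or_app; right; auto.
  - intros s x a [Hx|Hx] Ha.
    + destruct (Hit _ Hx) as [[c E]|Hx']; [discriminate|].
      destruct (hl_items P 0 _ Hx') as [[? E]|[[s' [al [E [E2 [E3 _]]]]]|[x' [a' [s' [E _]]]]]]; try discriminate.
      injection E; intros; subst. left. apply in_or_app; left. apply in_map. apply HC.
      exists (CSel (map snd s')). split; auto. simpl. apply in_map. apply in_map_iff. exists (x, a); auto.
    + exfalso. destruct (Hno _ Hx) as [[? E]|[[? E]|[[? E]|[? [? E]]]]]; discriminate.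
Qed.

Lemma is_sim_R : is_sim R.
Proof.
  intros P st [L [HI [HG HP]]]. repeat apply conj.
  - destruct (corr (length (filter isDone L)) L st (le_n _) HI HG) as [st' [H1 H2]].
    exists st'. split; auto. exact (Permutation_trans (den_prog_perm _ _ HP) H2).
  - intros st' HS. eapply safety; eauto.
  - intros HQ. eapply progress; eauto.
Qed.

Theorem theorem1 (P : program) (C : list chan) :
  P <> [] ->
  NoDup C ->
  (forall c, In c C <-> occurs c P) ->
  sim P (compile C P).
Proof.
  intros HP _ HC. exists R. split. apply is_sim_R.
  exists (map SFree C ++ hatL 0 P). repeat apply conj.
  - apply inst_compile; auto.
  - apply good_init; auto.
  - rewrite absL_app, absL_free, absL_hat. auto.
Qed.
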